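(* Suppose $f$ satisfies (I), $f(\cdot,i,\mathbf q)\in C^1([0,\infty))$ for all $i\in S,\mathbf q\in D_i$, $f_t$ satisfies (I), and condition (R) holds. Let $Q^*\in\mathcal Q$ be such that $\Gamma^{Q^*}_i(Q^*_i)>\Gamma^{Q^*}_i(Q_i)$ for all $i\in S$ and all $Q\in\mathcal Q$ with $Q_i\ne Q^*_i$. Then $Q^*$ is a strong equilibrium.
   Context: Let $S=\{1,\dots,N\}$. For $i\in S$ let $E_i=\{q\in\mathbb R^N: q_j\ge0\text{ for }j\ne i,\ q_i=-\sum_{j\ne i}q_j\}$ and $D_i\subseteq E_i$ given; $\mathcal Q=\{Q\in\mathbb R^{N\times N}: Q_i\in D_i\ \forall i\}$, $Q_i$ the $i$-th row. For $Q\in\mathcal Q$, $X$ is a time-homogeneous continuous-time Markov chain on $S$ with generator $Q$, $\mathbb E_{i,Q}$ the expectation given $X_0=i$. A payoff function $f$ assigns $f(t,i,\mathbf q)\in\mathbb R$ to $t\ge0,i\in S,\mathbf q\in D_i$. Condition (I) for $g$: $\int_0^\infty\sup_{i\in S,\mathbf q\in D_i,\|\mathbf q\|\le c}|g(t,i,\mathbf q)|dt<\infty$ for all $c>0$. Condition (R): there is $r(t,\varepsilon;i,\mathbf q)$, continuous in $\varepsilon$, with $|f(t+\varepsilon,i,\mathbf q)-f(t,i,\mathbf q)-\varepsilon f_t(t,i,\mathbf q)|\le r(t,\varepsilon;i,\mathbf q)$ for all $t\ge0,\varepsilon>0,i,\mathbf q$, $\int_0^\infty r(t,\varepsilon;i,\mathbf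 q)dt<\infty$ for small $\varepsilon>0$, and $\varepsilon\mapsto r(t,\varepsilon;i,\mathbf q)/\varepsilon$ nondecreasing. $F(i,Q)=\mathbb E_{i,Q}[\int_0^\infty f(t,X_t,Q_{X_t})dt]$, $F(Q)=(F(1,Q),\dots,F(N,Q))$. $Q\otimes_\varepsilon Q'$: generator $Q$ on $[0,\varepsilon]$, then $Q'$ on $(\varepsilon,\infty)$; $F(i,Q\otimes_\varepsilon Q')$ its expected payoff from $X_0=i$. $Q^*\in\mathcal Q$ is a strong equilibrium if for every $i\in S$ and $Q\in\mathcal Q$ there is $\varepsilon>0$ with $F(i,Q^* )\ge F(i,Q\otimes_{\varepsilon'}Q^* )$ for all $0<\varepsilon'\le\varepsilon$. $\Gamma^{Q^*}_i(\mathbf q)=f(0,i,\mathbf q)+\mathbf q\cdot F(Q^* )$ for $\mathbf q\in D_i$. *)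

(* Defs.v *)
From Stdlib Require Import Reals Lra Classical ClassicalEpsilon FunctionalExtensionality.
Open Scope R_scope.

(* States S = {1,...,N} are encoded as 0,...,N-1 (i < N).
   A row q in R^N is encoded as a function nat -> R vanishing at indices >= N.
   A matrix is a function nat -> nat -> R (rows Q i). *)

Fixpoint rsum (n : nat) (g : nat -> R) : R :=
  match n with O => 0 | S m => rsum m g + g m end.

(* l1 norm of a row of R^N (all norms on R^N equivalent; only used in (I)) *)
Definition rnorm (N : nat) (q : nat -> R) : R := rsum N (fun j => Rabs (q j)).

Definition InE (N i : nat) (q : nat -> R) : Prop :=
  (forall j, (N <= j)%nat -> q j = 0) /\
  (forall j, (j < N)%nat -> j <> i -> 0 <= q j) /\
  q i = - rsum N (fun j => if Nat.eq_dec j i then 0 else q j).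

Definition InQ (N : nat) (D : nat -> (nat -> R) -> Prop) (Q : nat -> nat -> R) : Prop :=
  forall i, (i < N)%nat -> D i (Q i).

Definition idm (i j : nat) : R := if Nat.eq_dec i j then 1 else 0.
Definition matmul (N : nat) (A B : nat -> nat -> R) : nat -> nat -> R :=
  fun i j => rsum N (fun k => A i k * B k j).
Fixpoint matpow (N : nat) (A : nat -> nat -> R) (m : nat) : nat -> nat -> R :=
  match m with O => idm | S m' => matmul N (matpow N A m') A end.

(* limit of a real sequence (0 if it does not converge) *)
Definition seq_lim (u : nat -> R) : R :=
  match excluded_middle_informative (exists l, Un_cv u l) with
  | left H => proj1_sig (constructive_indefinite_description _ H)
  | right _ => 0
  end.

(* (exp (t Q))_{ij} = sum_m t^m (Q^m)_{ij} / m!  : the transition probability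
   P(X_t = j | X_0 = i) of the chain with generator Q *)
Definition expm (N : nat) (Q : nat -> nat -> R) (t : R) (i j : nat) : R :=
  seq_lim (fun n => rsum n (fun m => t ^ m / INR (Factorial.fact m) * matpow N Q m i j)).

(* Riemann integral over [a,b] (0 if g is not Riemann integrable there) *)
Definition Rint (a b : R) (g : R -> R) : R :=
  match excluded_middle_informative
          (exists pr : Riemann_integrable g a b, True) with
  | left H => RiemannInt (proj1_sig (constructive_indefinite_description _ H))
  | right _ => 0
  end.

Definition has_improper_int (g : R -> R) (l : R) : Prop :=
  forall eps, 0 < eps -> exists T0, forall T, T0 <= T -> Rabs (Rint 0 T g - l) < eps.

Definition improper_int (g : R -> R) : R :=
  match excluded_middle_informative (exists l, has_improper_int g l) with
  | left H => proj1_sig (constructive_indefinite_description _ H)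
  | right _ => 0
  end.

(* y <= sup (Sset) in the extended reals (sup of the empty set taken as -oo) *)
Definition le_sup (Sset : R -> Prop) (y : R) : Prop :=
  forall z, z < y -> exists x, Sset x /\ z < x.

(* "int_0^oo sup{x | Sset t x} dt < oo", the integrand being nonnegative:
   the (inner) integral, i.e. the supremum of the integrals of nonnegative
   Riemann-integrable functions lying below the integrand on [0,T], is finite.
   For nonnegative lower semicontinuous integrands (the case of (I) below,
   a supremum of continuous functions) this coincides with the Lebesgue
   integral. *)
Definition finite_int_sup (Sset : R -> R -> Prop) : Prop :=
  exists M, forall (T : R) (g : R -> R) (pr : Riemann_integrable g 0 T),
    0 <= T ->
    (forall t, 0 <= t <= T -> 0 <= g t /\ le_sup (Sset t) (g t)) ->
    RiemannInt pr <= M.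

Definition finite_int (h : R -> R) : Prop :=
  finite_int_sup (fun t x => x = h t).

Definition payoff := R -> nat -> (nat -> R) -> R.

Definition CondI (N : nat) (D : nat -> (nat -> R) -> Prop) (g : payoff) : Prop :=
  forall c, 0 < c ->
    finite_int_sup (fun t x => exists i q,
      (i < N)%nat /\ D i q /\ rnorm N q <= c /\ x = Rabs (g t i q)).

Definition C1_deriv_on_nonneg (h h' : R -> R) : Prop :=
  (forall t, 0 <= t -> forall eps, 0 < eps -> exists delta, 0 < delta /\
      forall s, s <> 0 -> Rabs s < delta -> 0 <= t + s ->
        Rabs ((h (t + s) - h t) / s - h' t) < eps) /\
  (forall t, 0 <= t -> forall eps, 0 < eps -> exists delta, 0 < delta /\
      forall s, 0 <= s -> Rabs (s - t) < delta -> Rabs (h' s - h' t) < eps).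

Definition CondR (N : nat) (D : nat -> (nat -> R) -> Prop) (f ft : payoff) : Prop :=
  exists (r : R -> R -> nat -> (nat -> R) -> R),
    (forall t i q, (i < N)%nat -> D i q ->
       forall e, 0 < e -> continuity_pt (fun e' => r t e' i q) e) /\
    (forall t e i q, 0 <= t -> 0 < e -> (i < N)%nat -> D i q ->
       Rabs (f (t + e) i q - f t i q - e * ft t i q) <= r t e i q) /\
    (forall i q, (i < N)%nat -> D i q ->
       exists e0, 0 < e0 /\ forall e, 0 < e <= e0 -> finite_int (fun t => r t e i q)) /\
    (forall t i q e1 e2, (i < N)%nat -> D i q -> 0 < e1 <= e2 ->
       r t e1 i q / e1 <= r t e2 i q / e2).

(* F(i,Q) = E_{i,Q}[ int_0^oo f(t, X_t, Q_{X_t}) dt ]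
          = int_0^oo sum_j P_ij(t) f(t, j, Q_j) dt *)
Definition Fval (N : nat) (f : payoff) (Q : nat -> nat -> R) (i : nat) : R :=
  improper_int (fun t => rsum N (fun j => expm N Q t i j * f t j (Q j))).

(* F(i, Q (x)_eps Q') : generator Q on [0,eps], then Q' on (eps,oo) *)
Definition Fconcat (N : nat) (f : payoff) (Q Q' : nat -> nat -> R) (eps : R) (i : nat) : R :=
  improper_int (fun t =>
    if Rle_dec t eps
    then rsum N (fun j => expm N Q t i j * f t j (Q j))
    else rsum N (fun j =>
           rsum N (fun k => expm N Q eps i k * expm N Q' (t - eps) k j) * f t j (Q' j))).

Definition Gamma (N : nat) (f : payoff) (Qs : nat -> nat -> R) (i : nat) (q : nat -> R) : R :=
  f 0 i q + rsum N (fun j => q j * Fval N f Qs j).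

Definition StrongEq (N : nat) (D : nat -> (nat -> R) -> Prop) (f : payoff)
  (Qs : nat -> nat -> R) : Prop :=
  forall i Q, (i < N)%nat -> InQ N D Q ->
    exists eps, 0 < eps /\ forall e', 0 < e' <= eps ->
      Fval N f Qs i >= Fconcat N f Q Qs e' i.

(* Main.v *)
Require Import Defs.
From Stdlib Require Import Reals Lra Lia.
Open Scope R_scope.

Lemma rsum_ext n g h : (forall m, (m < n)%nat -> g m = h m) -> rsum n g = rsum n h.
Proof. induction n; simpl; intros H; [reflexivity|]. rewrite IHn by (intros; apply H; lia). rewrite H by lia. reflexivity. Qed.

Lemma rsum_plus n g h : rsum n (fun m => g m + h m) = rsum n g + rsum n h.
Proof. induction n; simpl; [ring|]. rewrite IHn; ring. Qed.

Lemma rsum_minus n g h : rsum n (fun m => g m - h m) = rsum n g - rsum n h.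
Proof. induction n; simpl; [ring|]. rewrite IHn; ring. Qed.

Lemma rsum_scal n c g : rsum n (fun m => c * g m) = c * rsum n g.
Proof. induction n; simpl; [ring|]. rewrite IHn; ring. Qed.

Lemma rsum_scalr n c g : rsum n (fun m => g m * c) = rsum n g * c.
Proof. induction n; simpl; [ring|]. rewrite IHn; ring. Qed.

Lemma rsum_zero n g : (forall m, (m < n)%nat -> g m = 0) -> rsum n g = 0.
Proof. intros H. rewrite (rsum_ext n g (fun _ => 0)) by auto. clear H. induction n; simpl; [ring|]. rewrite IHn; ring. Qed.

Lemma rsum_swap n p g : rsum n (fun a => rsum p (fun b => g a b)) = rsum p (fun b => rsum n (fun a => g a b)).
Proof. induction n; simpl. - symmetry; apply rsum_zero; auto. - rewrite IHn. rewrite <- rsum_plus. reflexivity. Qed.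

Lemma rsum_shift n g : rsum (S n) g = g 0%nat + rsum n (fun m => g (S m)).
Proof. induction n; simpl in *; [ring|]. rewrite IHn. ring. Qed.

Lemma rsum_le n g h : (forall m, (m < n)%nat -> g m <= h m) -> rsum n g <= rsum n h.
Proof. induction n; simpl; intros H; [lra|]. assert (H1 := H n ltac:(lia)). assert (rsum n g <= rsum n h) by (apply IHn; intros; apply H; lia). lra. Qed.

Lemma rsum_nonneg n g : (forall m, (m < n)%nat -> 0 <= g m) -> 0 <= rsum n g.
Proof. intros H. replace 0 with (rsum n (fun _ => 0)). apply rsum_le; auto. apply rsum_zero; auto. Qed.

Lemma rsum_abs n g : Rabs (rsum n g) <= rsum n (fun m => Rabs (g m)).
Proof. induction n; simpl. rewrite Rabs_R0; lra. eapply Rle_trans. apply Rabs_triang. lra. Qed.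

Lemma rsum_const n c : rsum n (fun _ => c) = INR n * c.
Proof. induction n; [simpl; ring|]. change (rsum (S n) (fun _ => c)) with (rsum n (fun _ => c) + c). rewrite IHn, S_INR; ring. Qed.

Lemma rsum_le_const n g c : (forall m, (m < n)%nat -> g m <= c) -> rsum n g <= INR n * c.
Proof. intros H. rewrite <- rsum_const. apply rsum_le; auto. Qed.

Lemma rsum_delta_l n i g : (i < n)%nat -> rsum n (fun k => idm i k * g k) = g i.
Proof. induction n; intros Hi; [lia|]. simpl. unfold idm at 2. destruct (Nat.eq_dec i n).
 - subst. rewrite rsum_zero. ring. intros m Hm. unfold idm. destruct (Nat.eq_dec n m); [lia|ring].
 - rewrite IHn by lia. ring. Qed.

Lemma rsum_delta_r n j g : (j < n)%nat -> rsum n (fun k => g k * idm k j) = g j.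
Proof. intros H. rewrite <- (rsum_delta_l n j g H). apply rsum_ext. intros m _. unfold idm.
 destruct (Nat.eq_dec m j), (Nat.eq_dec j m); subst; try lia; ring. Qed.

Lemma rsum_idm n i : (i < n)%nat -> rsum n (idm i) = 1.
Proof. intros H. rewrite <- (rsum_delta_l n i (fun _ => 1) H). apply rsum_ext; intros; ring. Qed.

Lemma rsum_S_sum n g : rsum (S n) g = sum_f_R0 g n.
Proof. induction n; simpl in *; [ring|]. rewrite <- IHn. reflexivity. Qed.

Definition meq (N : nat) (A B : nat -> nat -> R) := forall i j, (i < N)%nat -> (j < N)%nat -> A i j = B i j.

Lemma matmul_assoc N A B C0 i j : matmul N (matmul N A B) C0 i j = matmul N A (matmul N B C0) i j.
Proof. unfold matmul. transitivity (rsum N (fun l => rsum N (fun k => A i k * B k l * C0 l j))).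
 - apply rsum_ext; intros. rewrite <- rsum_scalr. reflexivity.
 - rewrite rsum_swap. apply rsum_ext; intros. rewrite <- rsum_scal. apply rsum_ext; intros; ring. Qed.

Lemma matmul_meq N A A' B B' : meq N A A' -> meq N B B' -> meq N (matmul N A B) (matmul N A' B').
Proof. intros H1 H2 i j Hi Hj. unfold matmul. apply rsum_ext; intros. rewrite H1, H2 by auto. reflexivity. Qed.

Lemma matpow_meq N A A' m : meq N A A' -> meq N (matpow N A m) (matpow N A' m).
Proof. intros H. induction m; simpl. intros i j _ _; reflexivity. apply matmul_meq; auto. Qed.

Lemma matmul_idm_r N A i j : (j < N)%nat -> matmul N A idm i j = A i j.
Proof. intros. unfold matmul. apply (rsum_delta_r N j (fun k => A i k)); auto. Qed.

Lemma matmul_idm_l N A i j : (i < N)%nat -> matmul N idm A i j = A i j.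
Proof. intros. unfold matmul. apply (rsum_delta_l N i (fun k => A k j)); auto. Qed.

Lemma matpow_add N A m n : meq N (matpow N A (m + n)) (matmul N (matpow N A m) (matpow N A n)).
Proof. unfold meq. induction n; intros i j Hi Hj.
 - rewrite Nat.add_0_r. simpl. rewrite matmul_idm_r; auto.
 - rewrite Nat.add_succ_r. simpl. rewrite <- matmul_assoc. apply (matmul_meq N); auto. intros ? ? ? ?; reflexivity. Qed.

Lemma matpow_scal N A c m i j : matpow N (fun a b => c * A a b) m i j = c ^ m * matpow N A m i j.
Proof. revert i j; induction m; intros; simpl. ring. unfold matmul. rewrite <- rsum_scal. apply rsum_ext; intros.
 rewrite IHm. ring. Qed.

Lemma matpow_bound N A a : 0 <= a -> (forall k j, (k < N)%nat -> Rabs (A k j) <= a) ->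
  forall m i j, Rabs (matpow N A m i j) <= (INR N * a) ^ m.
Proof. intros Ha HA. induction m; intros; simpl.
 - unfold idm. destruct Nat.eq_dec; rewrite ?Rabs_R1, ?Rabs_R0; lra.
 - unfold matmul. eapply Rle_trans. apply rsum_abs.
   replace (INR N * a * (INR N * a) ^ m) with (INR N * ((INR N * a)^m * a)) by ring.
   apply rsum_le_const. intros k Hk. rewrite Rabs_mult. apply Rmult_le_compat; auto using Rabs_pos. Qed.

Lemma matpow_nonneg N A : (forall k j, (k < N)%nat -> (j < N)%nat -> 0 <= A k j) ->
  forall m i j, (j < N)%nat -> 0 <= matpow N A m i j.
Proof. intros HA. induction m; intros; simpl.
 - unfold idm. destruct Nat.eq_dec; lra.
 - unfold matmul. apply rsum_nonneg. intros. apply Rmult_le_pos; auto. Qed.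

Lemma matpow_rowsum N A : (forall k, (k < N)%nat -> rsum N (A k) = 0) ->
  forall m i, rsum N (matpow N A (S m) i) = 0.
Proof. intros HA m i. simpl. unfold matmul. rewrite rsum_swap.
 apply rsum_zero. intros k Hk. rewrite rsum_scal. rewrite HA by auto. ring. Qed.

Require Import Defs.
From Stdlib Require Import Reals Lra Lia ClassicalEpsilon FunctionalExtensionality.
From Coquelicot Require Import Coquelicot.
Open Scope R_scope.

Definition ser (a : nat -> R) (l : R) := Un_cv (fun n => rsum n a) l.

Lemma ser_unique a l1 l2 : ser a l1 -> ser a l2 -> l1 = l2.
Proof. apply UL_sequence. Qed.

Lemma ser_ext a b l : (forall m, a m = b m) -> ser a l -> ser b l.
Proof. intros H S eps He. destruct (S eps He) as [M HM]. exists M. intros n Hn.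
 rewrite <- (rsum_ext n a b) by auto. auto. Qed.

Lemma ser_plus a b la lb : ser a la -> ser b lb -> ser (fun m => a m + b m) (la + lb).
Proof. intros Ha Hb. unfold ser. eapply Un_cv_ext. 2: apply CV_plus; [apply Ha|apply Hb].
 intros; simpl. rewrite rsum_plus. reflexivity. Qed.

Lemma cv_const c : Un_cv (fun _ => c) c.
Proof. intros eps He. exists 0%nat. intros. unfold Rdist. rewrite Rminus_diag, Rabs_R0. lra. Qed.

Lemma ser_scal c a la : ser a la -> ser (fun m => c * a m) (c * la).
Proof. intros Ha. unfold ser. eapply Un_cv_ext. 2: apply CV_mult; [apply cv_const|apply Ha].
 intros; simpl. rewrite rsum_scal. reflexivity. Qed.

Lemma ser_rsum n (a : nat -> nat -> R) l : (forall k, (k < n)%nat -> ser (a k) (l k)) ->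
  ser (fun m => rsum n (fun k => a k m)) (rsum n l).
Proof. induction n; intros H; simpl.
 - eapply ser_ext with (a := fun _ => 0). reflexivity. intros eps He. exists 0%nat. intros. rewrite rsum_zero by auto.
   unfold Rdist. rewrite Rminus_diag, Rabs_R0. lra.
 - apply ser_plus. apply IHn; intros; apply H; lia. apply H; lia. Qed.

Lemma ser_iff a l : ser a l <-> is_series a l.
Proof. rewrite is_series_Reals. unfold ser, infinite_sum, Un_cv. split; intros H eps He; destruct (H eps He) as [M HM].
 - exists M. intros n Hn. rewrite <- rsum_S_sum. apply HM. lia.
 - exists (S M). intros n Hn. destruct n. lia. rewrite rsum_S_sum. apply HM. lia. Qed.

Lemma ser_exp x : ser (fun m => x ^ m / INR (Factorial.fact m)) (exp x).
Proof. apply ser_iff. generalize (is_exp_Reals x). unfold is_pseries. apply is_series_ext.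
 intros n. change (scal (pow_n x n) (/ INR (Factorial.fact n))) with (pow_n x n * / INR (Factorial.fact n)).
 rewrite pow_n_pow. reflexivity. Qed.

Lemma lim_abs_le u l c n0 : Un_cv u l -> (forall n, (n0 <= n)%nat -> Rabs (u n) <= c) -> Rabs l <= c.
Proof. intros Hu Hb. destruct (Rle_dec (Rabs l) c) as [h|h]; auto. exfalso.
 destruct (Hu (Rabs l - c)) as [M HM]. lra. specialize (HM (max M n0) ltac:(lia)).
 specialize (Hb (max M n0) ltac:(lia)). unfold Rdist in HM.
 assert (Rabs l <= Rabs (u (max M n0)) + Rabs (u (max M n0) - l)).
 { replace l with (u (max M n0) - (u (max M n0) - l)) at 1 by ring. eapply Rle_trans. apply Rabs_triang. rewrite Rabs_Ropp. lra. }
 lra. Qed.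

Lemma lim_le_ev u l c n0 : Un_cv u l -> (forall n, (n0 <= n)%nat -> u n <= c) -> l <= c.
Proof. intros Hu Hb. destruct (Rle_dec l c) as [h|h]; auto. exfalso.
 destruct (Hu (l - c)) as [M HM]. lra. specialize (HM (max M n0) ltac:(lia)).
 specialize (Hb (max M n0) ltac:(lia)). unfold Rdist in HM. apply Rabs_def2 in HM. lra. Qed.

Lemma ser_le a b la lb : (forall m, a m <= b m) -> ser a la -> ser b lb -> la <= lb.
Proof. intros H Ha Hb. eapply Rle_cv_lim; [|apply Ha|apply Hb]. intros; apply rsum_le; auto. Qed.

Lemma ser_nonneg a la : (forall m, 0 <= a m) -> ser a la -> 0 <= la.
Proof. intros H Ha. replace 0 with (rsum 0 a) by reflexivity.
 apply Rle_cv_lim with (Un := fun _ => rsum 0 a) (Vn := fun n => rsum n a); auto using cv_const.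
 intros n. induction n; simpl. lra. specialize (H n). simpl in IHn. lra. Qed.

Lemma ser_exists_abs a b lb : (forall m, Rabs (a m) <= b m) -> ser b lb -> exists l, ser a l.
Proof. intros H Hb. assert (ex_series a) as [l Hl].
 { apply (@ex_series_le R_AbsRing R_CompleteNormedModule) with b. intros; apply H. exists lb. apply ser_iff; auto. }
 exists l. apply ser_iff; auto. Qed.

Lemma ser_abs_ex a b lb : (forall m, Rabs (a m) <= b m) -> ser b lb -> ex_series (fun m => Rabs (a m)).
Proof. intros H Hb. apply (@ex_series_le R_AbsRing R_CompleteNormedModule) with b. intros. change (norm (Rabs (a n))) with (Rabs (Rabs (a n))).
 rewrite Rabs_Rabsolu; auto. exists lb. apply ser_iff; auto. Qed.

Lemma rsum_growing a : (forall m, 0 <= a m) -> forall n p, (n <= p)%nat -> rsum n a <= rsum p a.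
Proof. intros H n p Hnp. induction Hnp. lra. simpl. specialize (H m). lra. Qed.

Lemma ser_partial_le a la : (forall m, 0 <= a m) -> ser a la -> forall n, rsum n a <= la.
Proof. intros H Ha n. apply (growing_ineq (fun n => rsum n a)); auto. intros k. simpl. specialize (H k). lra. Qed.

Lemma ser_tail a l B lB n0 : ser a l -> ser B lB -> (forall m, 0 <= B m) ->
  (forall m, (n0 <= m)%nat -> Rabs (a m) <= B m) -> Rabs (l - rsum n0 a) <= lB.
Proof. intros Ha HB HB0 Hab.
 apply lim_abs_le with (u := fun n => rsum n a - rsum n0 a) (n0 := n0).
 - eapply Un_cv_ext. 2: apply CV_minus; [apply Ha|apply cv_const]. intros; simpl. reflexivity.
 - intros n Hn. assert (forall d, Rabs (rsum (n0 + d) a - rsum n0 a) <= rsum (n0 + d) B - rsum n0 B).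
   { induction d. rewrite Nat.add_0_r. rewrite Rminus_diag, Rabs_R0. lra.
     rewrite Nat.add_succ_r. simpl. assert (Rabs (a (n0+d)%nat) <= B (n0+d)%nat) by (apply Hab; lia).
     replace (rsum (n0 + d) a + a (n0 + d)%nat - rsum n0 a) with ((rsum (n0 + d) a - rsum n0 a) + a (n0+d)%nat) by ring.
     eapply Rle_trans. apply Rabs_triang. lra. }
   replace n with (n0 + (n - n0))%nat by lia. eapply Rle_trans. apply H.
   assert (0 <= rsum n0 B) by (apply rsum_nonneg; auto). assert (rsum (n0 + (n-n0)) B <= lB) by (apply ser_partial_le; auto). lra. Qed.

Lemma seq_lim_eq u l : Un_cv u l -> seq_lim u = l.
Proof. intros H. unfold seq_lim. destruct excluded_middle_informative as [e|n].
 - destruct constructive_indefinite_description as [l' Hl']. simpl. eapply UL_sequence; eauto.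
 - exfalso; apply n; eauto. Qed.

Fixpoint bin (n k : nat) : R :=
  match n with
  | O => match k with O => 1 | S _ => 0 end
  | S n' => match k with O => 1 | S k' => bin n' k' + bin n' (S k') end
  end.

Lemma bin_0 n : bin n 0 = 1.
Proof. destruct n; reflexivity. Qed.

Lemma bin_over n k : (n < k)%nat -> bin n k = 0.
Proof. revert k; induction n; intros k H; destruct k; simpl; try lia; try reflexivity.
 rewrite !IHn by lia. ring. Qed.

Lemma C_n0 n : Binomial.C n 0 = 1.
Proof. unfold Binomial.C. rewrite Nat.sub_0_r. simpl Factorial.fact. rewrite INR_1. field. apply INR_fact_neq_0. Qed.
Lemma C_nn n : Binomial.C n n = 1.
Proof. unfold Binomial.C. rewrite Nat.sub_diag. simpl Factorial.fact. rewrite INR_1. field. apply INR_fact_neq_0. Qed.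

Lemma bin_C n k : (k <= n)%nat -> bin n k = Binomial.C n k.
Proof. revert k; induction n; intros k H.
 - destruct k; [|lia]. simpl. rewrite C_n0. reflexivity.
 - destruct k. rewrite bin_0, C_n0. reflexivity. simpl.
   destruct (Nat.eq_dec k n). subst. rewrite (bin_over n (S n)) by lia. rewrite IHn by lia. rewrite !C_nn. ring.
   rewrite !IHn by lia. apply pascal. lia. Qed.

Lemma C_fact p m : (m <= p)%nat -> Binomial.C p m / INR (Factorial.fact p) = / (INR (Factorial.fact m) * INR (Factorial.fact (p - m))).
Proof. intros. unfold Binomial.C. field. repeat split; apply INR_fact_neq_0. Qed.

Lemma bin_step (y : nat -> R) c p :
  rsum (S (S p)) (fun m => bin (S p) m * c ^ m * y (S p - m)%nat) =
  rsum (S p) (fun m => bin p m * c ^ m * y (S (p - m))) + c * rsum (S p) (fun m => bin p m * c ^ m * y (p - m)%nat).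
Proof.
 rewrite rsum_shift. rewrite <- rsum_scal.
 rewrite (rsum_ext (S p) (fun m => bin (S p) (S m) * c ^ S m * y (S p - S m)%nat)
     (fun m => bin p (S m) * c ^ S m * y (p - m)%nat + c * (bin p m * c ^ m * y (p - m)%nat))).
 2: { intros m _. simpl. replace (S p - S m)%nat with (p - m)%nat by lia. ring. }
 rewrite rsum_plus. rewrite bin_0. simpl (c ^ 0). rewrite Nat.sub_0_r.
 rewrite (rsum_shift p (fun m => bin p m * c ^ m * y (S (p - m)))). rewrite bin_0. rewrite Nat.sub_0_r. simpl (c^0).
 change (rsum (S p) (fun m => bin p (S m) * c ^ S m * y (p - m)%nat)) with
   (rsum p (fun m => bin p (S m) * c ^ S m * y (p - m)%nat) + bin p (S p) * c ^ S p * y (p - p)%nat).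
 rewrite (bin_over p (S p)) by lia.
 rewrite (rsum_ext p (fun m => bin p (S m) * c ^ S m * y (p - m)%nat) (fun m => bin p (S m) * c ^ S m * y (S (p - S m)))).
 2: { intros m Hm. replace (S (p - S m)) with (p - m)%nat by lia. reflexivity. }
 ring. Qed.

Lemma matpow_binom N A A' c : meq N A' (fun a b => A a b + c * idm a b) ->
  forall p, meq N (matpow N A' p) (fun i j => rsum (S p) (fun m => bin p m * c ^ m * matpow N A (p - m) i j)).
Proof. intros HA. induction p; intros i j Hi Hj.
 - simpl. ring.
 - change (matpow N A' (S p)) with (matmul N (matpow N A' p) A').
   rewrite (matmul_meq N _ _ _ _ IHp HA i j Hi Hj).
   rewrite (bin_step (fun k => matpow N A k i j)). unfold matmul at 1.
   set (Z := fun i k => rsum (S p) (fun m => bin p m * c ^ m * matpow N A (p - m) i k)).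
   change (rsum N (fun k => Z i k * (A k j + c * idm k j)) =
     rsum (S p) (fun m => bin p m * c ^ m * matpow N A (S (p - m)) i j) + c * Z i j).
   rewrite (rsum_ext N _ (fun k => Z i k * A k j + c * (Z i k * idm k j))) by (intros; ring).
   rewrite rsum_plus, rsum_scal. f_equal.
   + unfold Z. rewrite <- (rsum_ext N (fun k => rsum (S p) (fun m => bin p m * c ^ m * matpow N A (p - m) i k * A k j))) by (intros; rewrite <- rsum_scalr; reflexivity).
     rewrite rsum_swap. apply rsum_ext. intros m _. simpl. unfold matmul. rewrite <- rsum_scal. apply rsum_ext. intros; ring.
   + f_equal. apply (rsum_delta_r N j (Z i)). auto. Qed.

Require Import Defs.
From Stdlib Require Import Reals Lra Lia ClassicalEpsilon FunctionalExtensionality.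
From Coquelicot Require Import Coquelicot.
Open Scope R_scope.

Lemma pow_le_small h n0 m : 0 <= h <= 1 -> (n0 <= m)%nat -> h ^ m <= h ^ n0.
Proof. intros Hh Hm. induction Hm. lra. simpl. assert (0 <= h ^ m) by (apply pow_le; lra).
 assert (h * h ^ m <= 1 * h ^ m) by (apply Rmult_le_compat_r; lra). lra. Qed.

Definition term N Q t i j m := t ^ m / INR (Factorial.fact m) * matpow N Q m i j.

Section Expm.
Variable N : nat.
Variable Q : nat -> nat -> R.
Variable qa : R.
Hypothesis Hqa : 0 <= qa.
Hypothesis HQ : forall k j, (k < N)%nat -> Rabs (Q k j) <= qa.
Let K := INR N * qa.

Lemma K_pos : 0 <= K.
Proof. unfold K. apply Rmult_le_pos; auto. apply pos_INR. Qed.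

Lemma term_bound t i j m : Rabs (term N Q t i j m) <= (Rabs t * K) ^ m / INR (Factorial.fact m).
Proof. unfold term. rewrite Rabs_mult. unfold Rdiv. rewrite Rabs_mult, <- RPow_abs.
 rewrite Rabs_inv, (Rabs_right (INR _)) by (apply Rle_ge, pos_INR).
 rewrite Rpow_mult_distr. assert (0 < / INR (Factorial.fact m)) by (apply Rinv_0_lt_compat, INR_fact_lt_0).
 assert (Rabs (matpow N Q m i j) <= K ^ m) by (apply matpow_bound; auto).
 assert (0 <= Rabs t ^ m) by (apply pow_le, Rabs_pos).
 replace (Rabs t ^ m * K ^ m * / INR (Factorial.fact m)) with (Rabs t ^ m * / INR (Factorial.fact m) * K ^ m) by ring.
 apply Rmult_le_compat_l; auto. apply Rmult_le_pos; lra. Qed.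

Lemma expm_ser t i j : ser (term N Q t i j) (expm N Q t i j).
Proof. destruct (ser_exists_abs _ _ _ (term_bound t i j) (ser_exp (Rabs t * K))) as [l Hl].
 unfold expm. change (ser (term N Q t i j) (seq_lim (fun n => rsum n (term N Q t i j)))). rewrite (seq_lim_eq _ l Hl). exact Hl. Qed.

Lemma term_abs_ex t i j : ex_series (fun m => Rabs (term N Q t i j m)).
Proof. eapply ser_abs_ex. apply term_bound. apply ser_exp. Qed.

Lemma expm_0 i j : expm N Q 0 i j = idm i j.
Proof. eapply ser_unique. apply expm_ser. intros eps He. exists 1%nat. intros n Hn.
 destruct n; [lia|]. rewrite rsum_shift. rewrite rsum_zero. unfold term; simpl. unfold Rdist.
 replace (1 / 1 * idm i j + 0 - idm i j) with 0 by field. rewrite Rabs_R0; lra.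
 intros m _. unfold term. simpl. unfold Rdiv. ring. Qed.

Lemma expm_semigroup s t i j : (i < N)%nat -> (j < N)%nat ->
  expm N Q (s + t) i j = rsum N (fun k => expm N Q s i k * expm N Q t k j).
Proof. intros Hi Hj. eapply ser_unique. apply expm_ser.
 eapply ser_ext. 2: { apply ser_rsum. intros k Hk. apply ser_iff.
   apply is_series_mult. apply ser_iff, expm_ser. apply ser_iff, expm_ser. apply term_abs_ex. apply term_abs_ex. }
 intros p. simpl.
 rewrite (rsum_ext N _ (fun k => rsum (S p) (fun m => term N Q s i k m * term N Q t k j (p - m)))).
 2: { intros; rewrite rsum_S_sum; reflexivity. }
 rewrite rsum_swap.
 rewrite (rsum_ext (S p) _ (fun m => (Binomial.C p m * s ^ m * t ^ (p - m)) / INR (Factorial.fact p) * matpow N Q p i j)).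
 2: { intros m Hm. unfold term.
      assert (E: matpow N Q p i j = matmul N (matpow N Q m) (matpow N Q (p-m)) i j).
      { replace p with (m + (p-m))%nat at 1 by lia. apply matpow_add; auto. }
      rewrite E. unfold matmul. rewrite <- rsum_scal. apply rsum_ext; intros.
      replace (Binomial.C p m * s ^ m * t ^ (p - m) / INR (Factorial.fact p)) with (s^m * t^(p-m) * (Binomial.C p m / INR (Factorial.fact p))) by (unfold Rdiv; ring).
      rewrite C_fact by lia. field. split; apply INR_fact_neq_0. }
 assert (Hb: rsum (S p) (fun m => Binomial.C p m * s ^ m * t ^ (p - m) / INR (Factorial.fact p)) = (s+t)^p / INR (Factorial.fact p)).
 { unfold Rdiv. rewrite (rsum_scalr (S p) (/ INR (Factorial.fact p)) (fun m => Binomial.C p m * s ^ m * t ^ (p - m))). rewrite rsum_S_sum, <- binomial. reflexivity. }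
 rewrite (rsum_scalr (S p) (matpow N Q p i j) (fun m => Binomial.C p m * s ^ m * t ^ (p - m) / INR (Factorial.fact p))), Hb. unfold term. reflexivity. Qed.

Lemma expm_rowsum t i : (i < N)%nat -> (forall k, (k < N)%nat -> rsum N (Q k) = 0) -> rsum N (expm N Q t i) = 1.
Proof. intros Hi Hrow. eapply ser_unique. apply (ser_rsum N (fun j => term N Q t i j) (expm N Q t i)).
 intros; apply expm_ser. intros eps He. exists 1%nat. intros n Hn. destruct n; [lia|]. rewrite rsum_shift.
 rewrite (rsum_zero n (fun m => rsum N (fun j => term N Q t i j (S m)))).
 2: { intros m _. unfold term. rewrite (rsum_scal N (t^(S m)/INR (Factorial.fact (S m))) (fun j => matpow N Q (S m) i j)).
      replace (rsum N (fun j => matpow N Q (S m) i j)) with 0 by (symmetry; apply (matpow_rowsum N Q Hrow m i)). ring. }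
 rewrite (rsum_ext N (fun j => term N Q t i j 0) (fun j => idm i j)) by (intros; unfold term; simpl; field).
 rewrite rsum_idm by auto. unfold Rdist. replace (1+0-1) with 0 by ring. rewrite Rabs_R0; lra. Qed.

Lemma expm_small1 h i j : 0 <= h <= 1 -> Rabs (expm N Q h i j - idm i j) <= h * exp K.
Proof. intros Hh. replace (idm i j) with (rsum 1 (term N Q h i j)) by (unfold term; simpl; field).
 apply ser_tail with (B := fun m => h * (K ^ m / INR (Factorial.fact m))).
 apply expm_ser. apply ser_scal, ser_exp. intros. apply Rmult_le_pos. lra. apply Rmult_le_pos. apply pow_le, K_pos. left; apply Rinv_0_lt_compat, INR_fact_lt_0.
 intros m Hm. eapply Rle_trans. apply term_bound. rewrite Rabs_right by lra. rewrite Rpow_mult_distr.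
 assert (h ^ m <= h ^ 1) by (apply pow_le_small; auto). simpl in H. rewrite Rmult_1_r in H.
 assert (0 <= K ^ m / INR (Factorial.fact m)) by (apply Rmult_le_pos; [apply pow_le, K_pos| left; apply Rinv_0_lt_compat, INR_fact_lt_0]).
 unfold Rdiv in *. rewrite Rmult_assoc. apply Rmult_le_compat_r; auto. Qed.

Lemma expm_small2 h i j : (i < N)%nat -> 0 <= h <= 1 -> Rabs (expm N Q h i j - idm i j - h * Q i j) <= h ^ 2 * exp K.
Proof. intros Hi Hh. replace (expm N Q h i j - idm i j - h * Q i j) with (expm N Q h i j - rsum 2 (term N Q h i j)).
 2: { unfold term; simpl. rewrite matmul_idm_l by auto. field. }
 apply ser_tail with (B := fun m => h ^ 2 * (K ^ m / INR (Factorial.fact m))).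
 apply expm_ser. apply ser_scal, ser_exp. intros. apply Rmult_le_pos. apply pow_le; lra. apply Rmult_le_pos. apply pow_le, K_pos. left; apply Rinv_0_lt_compat, INR_fact_lt_0.
 intros m Hm. eapply Rle_trans. apply term_bound. rewrite Rabs_right by lra. rewrite Rpow_mult_distr.
 assert (h ^ m <= h ^ 2) by (apply pow_le_small; auto).
 assert (0 <= K ^ m / INR (Factorial.fact m)) by (apply Rmult_le_pos; [apply pow_le, K_pos| left; apply Rinv_0_lt_compat, INR_fact_lt_0]).
 unfold Rdiv in *. rewrite Rmult_assoc. apply Rmult_le_compat_r; auto. Qed.

End Expm.

Lemma expm_nonneg N Q qa t i j : 0 <= qa -> (forall k j, (k < N)%nat -> Rabs (Q k j) <= qa) ->
  (forall k l, (k < N)%nat -> (l < N)%nat -> k <> l -> 0 <= Q k l) ->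
  0 <= t -> (i < N)%nat -> (j < N)%nat -> 0 <= expm N Q t i j.
Proof. intros Hqa HQ Hoff Ht Hi Hj.
 set (Q' := fun a b => Q a b + qa * idm a b).
 assert (HQ' : forall k j, (k < N)%nat -> Rabs (Q' k j) <= 2 * qa).
 { intros k l Hk. unfold Q'. eapply Rle_trans. apply Rabs_triang. rewrite Rabs_mult, (Rabs_right qa) by lra.
   assert (Rabs (idm k l) <= 1) by (unfold idm; destruct Nat.eq_dec; rewrite ?Rabs_R1, ?Rabs_R0; lra).
   specialize (HQ k l Hk). assert (qa * Rabs (idm k l) <= qa * 1) by (apply Rmult_le_compat_l; lra). lra. }
 assert (Hnn : forall k l, (k < N)%nat -> (l < N)%nat -> 0 <= Q' k l).
 { intros k l Hk Hl. unfold Q', idm. destruct (Nat.eq_dec k l).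
   - subst. specialize (HQ l l Hk). apply Rabs_le_between in HQ. lra.
   - specialize (Hoff k l Hk Hl n). lra. }
 assert (H2 : 0 <= 2 * qa) by lra.
 assert (HE : 0 <= expm N Q' t i j).
 { eapply ser_nonneg. 2: apply (expm_ser N Q' (2*qa) H2 HQ'). intros m. unfold term.
   apply Rmult_le_pos. apply Rmult_le_pos. apply pow_le; auto. left; apply Rinv_0_lt_compat, INR_fact_lt_0.
   apply matpow_nonneg; auto. }
 assert (Hexp : 0 < exp (- qa * t)) by apply exp_pos.
 replace (expm N Q t i j) with (exp (- qa * t) * expm N Q' t i j). apply Rmult_le_pos; lra.
 eapply ser_unique. 2: apply (expm_ser N Q qa Hqa HQ).
 eapply ser_ext. 2: { apply ser_iff. apply is_series_mult. apply ser_iff, ser_exp. apply ser_iff, (expm_ser N Q' (2*qa) H2 HQ').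
   eapply ser_abs_ex. 2: apply (ser_exp (Rabs (-qa * t))). intros m. unfold Rdiv. rewrite Rabs_mult, <- RPow_abs.
   rewrite Rabs_inv, (Rabs_right (INR _)) by (apply Rle_ge, pos_INR). lra.
   apply (term_abs_ex N Q' (2*qa) H2 HQ'). }
 intros p. simpl. rewrite <- rsum_S_sum. unfold term at 2.
 rewrite (matpow_binom N Q' Q (-qa)) by (auto; intros a b _ _; unfold Q'; ring).
 rewrite <- rsum_scal. apply rsum_ext. intros m Hm. unfold term.
 rewrite bin_C by lia.
 replace (t ^ p / INR (Factorial.fact p) * (Binomial.C p m * (- qa) ^ m * matpow N Q' (p - m) i j))
   with ((Binomial.C p m / INR (Factorial.fact p)) * (- qa) ^ m * t ^ (m + (p - m)) * matpow N Q' (p - m) i j)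
   by (replace (m + (p - m))%nat with p by lia; unfold Rdiv; ring).
 rewrite C_fact by lia. rewrite pow_add, Rpow_mult_distr. field. split; apply INR_fact_neq_0. Qed.

Require Import Defs.
From Stdlib Require Import Reals Lra Lia ClassicalEpsilon FunctionalExtensionality.
Open Scope R_scope.

Definition Gen (N : nat) (Q : nat -> nat -> R) : Prop :=
  exists qa, 0 <= qa /\ (forall k j, (k < N)%nat -> Rabs (Q k j) <= qa) /\
   (forall k l, (k < N)%nat -> (l < N)%nat -> k <> l -> 0 <= Q k l) /\
   (forall k, (k < N)%nat -> rsum N (Q k) = 0).

Lemma rsum_split_i n q i : rsum n q = rsum n (fun j => if Nat.eq_dec j i then 0 else q j) + (if Compare_dec.lt_dec i n then q i else 0).
Proof. induction n; simpl. ring. rewrite IHn. destruct (Nat.eq_dec n i), (Compare_dec.lt_dec i n), (Compare_dec.lt_dec i (S n)); subst; try lia; ring. Qed.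

Lemma rsum_single_le n g m : (forall k, (k < n)%nat -> 0 <= g k) -> (m < n)%nat -> g m <= rsum n g.
Proof. induction n; intros H Hm. lia. simpl. destruct (Nat.eq_dec m n). subst.
 assert (0 <= rsum n g) by (apply rsum_nonneg; auto). lra.
 assert (g m <= rsum n g) by (apply IHn; auto; lia). specialize (H n ltac:(lia)). lra. Qed.

Lemma InQ_Gen N D Q : (forall i q, (i < N)%nat -> D i q -> InE N i q) -> InQ N D Q -> Gen N Q.
Proof. intros HD HQ. exists (rsum N (fun k => rsum N (fun j => Rabs (Q k j)))). repeat split.
 - apply rsum_nonneg; intros; apply rsum_nonneg; intros; apply Rabs_pos.
 - intros k j Hk. destruct (HD k (Q k) Hk (HQ k Hk)) as [H1 [H2 H3]]. destruct (Compare_dec.lt_dec j N).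
   + eapply Rle_trans. 2: apply (rsum_single_le N _ k); auto. apply (rsum_single_le N (fun j => Rabs (Q k j))); auto.
     intros; apply Rabs_pos. intros; apply rsum_nonneg; intros; apply Rabs_pos.
   + rewrite H1 by lia. rewrite Rabs_R0. apply rsum_nonneg; intros; apply rsum_nonneg; intros; apply Rabs_pos.
 - intros k l Hk Hl Hkl. destruct (HD k (Q k) Hk (HQ k Hk)) as [H1 [H2 H3]]. apply H2; auto.
 - intros k Hk. destruct (HD k (Q k) Hk (HQ k Hk)) as [H1 [H2 H3]]. rewrite (rsum_split_i N (Q k) k).
   destruct (Compare_dec.lt_dec k N); [|lia]. rewrite H3. ring. Qed.

Section GenFacts.
Variable N : nat.
Variable Q : nat -> nat -> R.
Hypothesis HG : Gen N Q.

Lemma P_nonneg t i j : 0 <= t -> (i < N)%nat -> (j < N)%nat -> 0 <= expm N Q t i j.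
Proof. destruct HG as [qa [H1 [H2 [H3 H4]]]]. intros. apply (expm_nonneg N Q qa); auto. Qed.

Lemma P_rowsum t i : (i < N)%nat -> rsum N (expm N Q t i) = 1.
Proof. destruct HG as [qa [H1 [H2 [H3 H4]]]]. intros. apply (expm_rowsum N Q qa); auto. Qed.

Lemma P_le1 t i j : 0 <= t -> (i < N)%nat -> (j < N)%nat -> expm N Q t i j <= 1.
Proof. intros. rewrite <- (P_rowsum t i) by auto. apply (rsum_single_le N (expm N Q t i)); auto.
 intros; apply P_nonneg; auto. Qed.

Lemma P_abs_le1 t i j : 0 <= t -> (i < N)%nat -> (j < N)%nat -> Rabs (expm N Q t i j) <= 1.
Proof. intros. rewrite Rabs_right. apply P_le1; auto. apply Rle_ge, P_nonneg; auto. Qed.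

Lemma P_semi s t i j : (i < N)%nat -> (j < N)%nat -> expm N Q (s + t) i j = rsum N (fun k => expm N Q s i k * expm N Q t k j).
Proof. destruct HG as [qa [H1 [H2 [H3 H4]]]]. intros. apply (expm_semigroup N Q qa); auto. Qed.

Lemma P_zero i j : expm N Q 0 i j = idm i j.
Proof. destruct HG as [qa [H1 [H2 [H3 H4]]]]. apply (expm_0 N Q qa); auto. Qed.

Lemma P_small1 : exists C, 0 <= C /\ forall h i j, 0 <= h <= 1 -> Rabs (expm N Q h i j - idm i j) <= C * h.
Proof. destruct HG as [qa [H1 [H2 [H3 H4]]]]. exists (exp (INR N * qa)). split. left; apply exp_pos.
 intros. rewrite Rmult_comm. apply (expm_small1 N Q qa); auto. Qed.

Lemma P_small2 : exists C, 0 <= C /\ forall h i j, (i < N)%nat -> 0 <= h <= 1 -> Rabs (expm N Q h i j - idm i j - h * Q i j) <= C * h ^ 2.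
Proof. destruct HG as [qa [H1 [H2 [H3 H4]]]]. exists (exp (INR N * qa)). split. left; apply exp_pos.
 intros. rewrite (Rmult_comm (exp _)). apply (expm_small2 N Q qa); auto. Qed.

Lemma P_lip : exists L, 0 <= L /\ forall t h i j, 0 <= t -> 0 <= h <= 1 -> (i < N)%nat -> (j < N)%nat ->
  Rabs (expm N Q (t + h) i j - expm N Q t i j) <= L * h.
Proof. destruct P_small1 as [C [HC HS]]. exists (INR N * C). split. apply Rmult_le_pos; auto; apply pos_INR.
 intros t h i j Ht Hh Hi Hj. rewrite P_semi by auto.
 replace (expm N Q t i j) with (rsum N (fun k => expm N Q t i k * idm k j)) by (apply (rsum_delta_r N j (expm N Q t i)); auto).
 rewrite <- rsum_minus. eapply Rle_trans. apply rsum_abs. replace (INR N * C * h) with (INR N * (C * h)) by ring.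
 apply rsum_le_const. intros k Hk. rewrite <- Rmult_minus_distr_l, Rabs_mult.
 replace (C * h) with (1 * (C * h)) by ring. apply Rmult_le_compat; auto using Rabs_pos. apply P_abs_le1; auto. Qed.

End GenFacts.

Require Import Defs.
From Stdlib Require Import Reals Lra Lia ClassicalEpsilon FunctionalExtensionality.
From Coquelicot Require Import Coquelicot.
Open Scope R_scope.

Definition cont_on (a b : R) (g : R -> R) : Prop :=
  forall t, a <= t <= b -> forall eps, 0 < eps -> exists delta, 0 < delta /\
    forall s, a <= s <= b -> Rabs (s - t) < delta -> Rabs (g s - g t) < eps.

Definition clamp a b x := Rmax a (Rmin b x).

Lemma clamp_in a b x : a <= b -> a <= clamp a b x <= b.
Proof. intros. unfold clamp, Rmax, Rmin. repeat destruct Rle_dec; lra. Qed.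

Lemma clamp_id a b x : a <= x <= b -> clamp a b x = x.
Proof. intros. unfold clamp, Rmax, Rmin. repeat destruct Rle_dec; lra. Qed.

Lemma clamp_lip a b x y : a <= b -> Rabs (clamp a b x - clamp a b y) <= Rabs (x - y).
Proof. intros. unfold clamp, Rmax, Rmin. repeat destruct Rle_dec; unfold Rabs; repeat destruct Rcase_abs; lra. Qed.

Lemma clamp_cont a b g : a <= b -> cont_on a b g -> forall z, continuity_pt (fun x => g (clamp a b x)) z.
Proof. intros Hab Hg z eps He. destruct (Hg (clamp a b z) (clamp_in a b z Hab) eps He) as [d [Hd Hs]].
 exists d. split. lra. intros x [_ Hx]. unfold R_dist in *. simpl. unfold R_dist.
 apply Hs. apply clamp_in; auto. eapply Rle_lt_trans. apply clamp_lip; auto. auto. Qed.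

Lemma cont_on_ex_RInt a b g : a <= b -> cont_on a b g -> ex_RInt g a b.
Proof. intros Hab Hg. apply (ex_RInt_ext (fun x => g (clamp a b x))).
 - intros x Hx. rewrite Rmin_left, Rmax_right in Hx by auto. rewrite clamp_id; auto. lra.
 - apply (@ex_RInt_continuous R_CompleteNormedModule). intros z _. apply continuity_pt_filterlim. apply clamp_cont; auto. Qed.

Lemma cont_on_abs a b g : cont_on a b g -> cont_on a b (fun t => Rabs (g t)).
Proof. intros Hg t Ht eps He. destruct (Hg t Ht eps He) as [d [Hd Hs]]. exists d. split; auto.
 intros s Hs1 Hs2. eapply Rle_lt_trans. apply Rabs_triang_inv2. apply Hs; auto. Qed.

Lemma cont_on_bound a b g : a <= b -> cont_on a b g -> exists B, 0 <= B /\ forall t, a <= t <= b -> Rabs (g t) <= B.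
Proof. intros Hab Hg. destruct (continuity_ab_maj (fun x => Rabs (g (clamp a b x))) a b Hab) as [M [HM _]].
 - intros c _. apply (clamp_cont a b (fun t => Rabs (g t))); auto. apply cont_on_abs; auto.
 - exists (Rabs (g (clamp a b M))). split. apply Rabs_pos. intros t Ht. specialize (HM t Ht). simpl in HM.
   rewrite clamp_id in HM; auto. Qed.

Lemma cont_on_const a b c : cont_on a b (fun _ => c).
Proof. intros t Ht eps He. exists 1. split. lra. intros. rewrite Rminus_diag, Rabs_R0; auto. Qed.

Lemma cont_on_plus a b f g : cont_on a b f -> cont_on a b g -> cont_on a b (fun t => f t + g t).
Proof. intros Hf Hg t Ht eps He. destruct (Hf t Ht (eps/2)) as [d1 [Hd1 H1]]. lra. destruct (Hg t Ht (eps/2)) as [d2 [Hd2 H2]]. lra.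
 exists (Rmin d1 d2). split. apply Rmin_pos; auto. intros s Hs Hst.
 assert (Rabs (s - t) < d1) by (eapply Rlt_le_trans; [apply Hst|apply Rmin_l]).
 assert (Rabs (s - t) < d2) by (eapply Rlt_le_trans; [apply Hst|apply Rmin_r]).
 specialize (H1 s Hs H). specialize (H2 s Hs H0).
 replace (f s + g s - (f t + g t)) with ((f s - f t) + (g s - g t)) by ring. eapply Rle_lt_trans. apply Rabs_triang. lra. Qed.

Lemma cont_on_scal a b c g : cont_on a b g -> cont_on a b (fun t => c * g t).
Proof. intros Hg t Ht eps He. destruct (Hg t Ht (eps / (Rabs c + 1))) as [d [Hd H1]].
 apply Rdiv_lt_0_compat; auto. assert (0 <= Rabs c) by apply Rabs_pos. lra.
 exists d. split; auto. intros s Hs Hst. rewrite <- Rmult_minus_distr_l, Rabs_mult.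
 specialize (H1 s Hs Hst). assert (0 <= Rabs c) by apply Rabs_pos.
 apply Rle_lt_trans with (Rabs c * (eps / (Rabs c + 1))). apply Rmult_le_compat_l; lra.
 apply Rlt_le_trans with ((Rabs c + 1) * (eps / (Rabs c + 1))). apply Rmult_lt_compat_r. apply Rdiv_lt_0_compat; lra. lra. right; field; lra. Qed.

Lemma cont_on_minus a b f g : cont_on a b f -> cont_on a b g -> cont_on a b (fun t => f t - g t).
Proof. intros Hf Hg. apply (cont_on_plus a b f (fun t => - g t)); auto.
 intros t Ht eps He. destruct (Hg t Ht eps He) as [d [Hd H]]. exists d. split; auto. intros.
 replace (- g s - - g t) with (- (g s - g t)) by ring. rewrite Rabs_Ropp. auto. Qed.

Lemma cont_on_mult a b f g : a <= b -> cont_on a b f -> cont_on a b g -> cont_on a b (fun t => f t * g t).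
Proof. intros Hab Hf Hg. destruct (cont_on_bound a b f Hab Hf) as [Bf [HBf Hbf]]. destruct (cont_on_bound a b g Hab Hg) as [Bg [HBg Hbg]].
 intros t Ht eps He. destruct (Hf t Ht (eps/2/(Bg+1))) as [d1 [Hd1 H1]]. apply Rdiv_lt_0_compat; lra.
 destruct (Hg t Ht (eps/2/(Bf+1))) as [d2 [Hd2 H2]]. apply Rdiv_lt_0_compat; lra.
 exists (Rmin d1 d2). split. apply Rmin_pos; auto. intros s Hs Hst.
 assert (Rabs (s - t) < d1) by (eapply Rlt_le_trans; [apply Hst|apply Rmin_l]).
 assert (Rabs (s - t) < d2) by (eapply Rlt_le_trans; [apply Hst|apply Rmin_r]).
 specialize (H1 s Hs H). specialize (H2 s Hs H0).
 replace (f s * g s - f t * g t) with (f s * (g s - g t) + g t * (f s - f t)) by ring.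
 eapply Rle_lt_trans. apply Rabs_triang. rewrite !Rabs_mult.
 assert (Rabs (f s) * Rabs (g s - g t) <= (Bf + 1) * (eps/2/(Bf+1))).
 { apply Rmult_le_compat; try apply Rabs_pos. specialize (Hbf s Hs); lra. lra. }
 assert (Rabs (g t) * Rabs (f s - f t) <= (Bg + 1) * (eps/2/(Bg+1))).
 { apply Rmult_le_compat; try apply Rabs_pos. specialize (Hbg t Ht); lra. lra. }
 replace ((Bf + 1) * (eps/2/(Bf+1))) with (eps/2) in H3 by (field; lra).
 replace ((Bg + 1) * (eps/2/(Bg+1))) with (eps/2) in H4 by (field; lra).
 assert (Rabs (f s) * Rabs (g s - g t) < eps/2 \/ Rabs (g t) * Rabs (f s - f t) < eps / 2 \/
   (Rabs (f s) * Rabs (g s - g t) <= eps/2 /\ Rabs (g t) * Rabs (f s - f t) <= eps/2)) by (right; right; lra).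
 clear H5.
 assert (Rabs (f s) * Rabs (g s - g t) < (Bf + 1) * (eps/2/(Bf+1))).
 { apply Rle_lt_trans with ((Bf+1) * Rabs (g s - g t)). apply Rmult_le_compat_r. apply Rabs_pos. specialize (Hbf s Hs); lra.
   apply Rmult_lt_compat_l; lra. }
 replace ((Bf + 1) * (eps/2/(Bf+1))) with (eps/2) in H5 by (field; lra). lra. Qed.

Lemma cont_on_rsum a b n (g : nat -> R -> R) : (forall k, (k < n)%nat -> cont_on a b (g k)) -> cont_on a b (fun t => rsum n (fun k => g k t)).
Proof. induction n; intros H; simpl. apply cont_on_const. apply cont_on_plus. apply IHn; auto. apply H; lia. Qed.

Lemma cont_on_sub a b a' b' g : a <= a' -> b' <= b -> cont_on a b g -> cont_on a' b' g.
Proof. intros H1 H2 Hg t Ht eps He. destruct (Hg t ltac:(lra) eps He) as [d [Hd H]]. exists d. split; auto.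
 intros s Hs. apply H. lra. Qed.

Lemma cont_on_shift a b c g : cont_on a b g -> cont_on (a + c) (b + c) (fun t => g (t - c)).
Proof. intros Hg t Ht eps He. destruct (Hg (t - c) ltac:(lra) eps He) as [d [Hd H]]. exists d. split; auto.
 intros s Hs Hst. apply H. lra. replace (s - c - (t - c)) with (s - t) by ring. auto. Qed.

Lemma cont_on_lip a b g L : 0 <= L -> (forall s t, a <= s <= b -> a <= t <= b -> Rabs (s - t) <= 1 -> Rabs (g s - g t) <= L * Rabs (s - t)) -> cont_on a b g.
Proof. intros HL H t Ht eps He. exists (Rmin 1 (eps / (L + 1))). split. apply Rmin_pos. lra. apply Rdiv_lt_0_compat; lra.
 intros s Hs Hst. assert (Rabs (s - t) < 1) by (eapply Rlt_le_trans; [apply Hst|apply Rmin_l]).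
 assert (Rabs (s - t) < eps / (L+1)) by (eapply Rlt_le_trans; [apply Hst|apply Rmin_r]).
 eapply Rle_lt_trans. apply H; auto. lra. apply Rle_lt_trans with ((L+1) * Rabs (s - t)).
 assert (0 <= Rabs (s - t)) by apply Rabs_pos. nra.
 apply Rlt_le_trans with ((L+1) * (eps / (L+1))). apply Rmult_lt_compat_l; lra. right; field; lra. Qed.

Lemma RInt_plus' f g a b : ex_RInt f a b -> ex_RInt g a b -> RInt (fun t => f t + g t) a b = RInt f a b + RInt g a b.
Proof. intros. apply (RInt_plus f g a b); auto. Qed.
Lemma RInt_minus' f g a b : ex_RInt f a b -> ex_RInt g a b -> RInt (fun t => f t - g t) a b = RInt f a b - RInt g a b.
Proof. intros. apply (RInt_minus f g a b); auto. Qed.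
Lemma RInt_scal' f a b c : ex_RInt f a b -> RInt (fun t => c * f t) a b = c * RInt f a b.
Proof. intros. apply (RInt_scal f a b c); auto. Qed.
Lemma ex_RInt_plus' f g a b : ex_RInt f a b -> ex_RInt g a b -> ex_RInt (fun t => f t + g t) a b.
Proof. intros. apply (ex_RInt_plus f g a b); auto. Qed.
Lemma ex_RInt_scal' f a b c : ex_RInt f a b -> ex_RInt (fun t => c * f t) a b.
Proof. intros. apply (ex_RInt_scal f a b c); auto. Qed.
Lemma RInt_Chasles' f a b c : ex_RInt f a b -> ex_RInt f b c -> RInt f a b + RInt f b c = RInt f a c.
Proof. intros. apply (RInt_Chasles f a b c); auto. Qed.

Lemma ex_RInt_rsum a b n (g : nat -> R -> R) : (forall k, (k < n)%nat -> ex_RInt (g k) a b) -> ex_RInt (fun t => rsum n (fun k => g k t)) a b.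
Proof. induction n; intros H; simpl. apply (ex_RInt_const a b 0). apply ex_RInt_plus'. apply IHn; auto. apply H; lia. Qed.

Lemma RInt_rsum a b n (g : nat -> R -> R) : (forall k, (k < n)%nat -> ex_RInt (g k) a b) ->
  RInt (fun t => rsum n (fun k => g k t)) a b = rsum n (fun k => RInt (g k) a b).
Proof. induction n; intros H; simpl.
 - rewrite RInt_const. unfold scal; simpl. unfold mult; simpl. ring.
 - assert (H1 : forall k, (k < n)%nat -> ex_RInt (g k) a b) by (intros; apply H; lia).
   rewrite RInt_plus'. rewrite IHn; auto. apply ex_RInt_rsum; auto. apply H; lia. Qed.

Lemma RInt_abs_bound f a b M : a <= b -> ex_RInt f a b -> (forall t, a <= t <= b -> Rabs (f t) <= M) -> Rabs (RInt f a b) <= (b - a) * M.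
Proof. apply abs_RInt_le_const. Qed.

Lemma Rint_eq a b g : ex_RInt g a b -> Rint a b g = RInt g a b.
Proof. intros H. unfold Rint. destruct excluded_middle_informative as [e|n].
 - symmetry. apply RInt_Reals.
 - exfalso. apply n. exists (ex_RInt_Reals_0 g a b H). auto. Qed.

Definition lim_inf (F : R -> R) (l : R) := forall eps, 0 < eps -> exists T0, forall T, T0 <= T -> Rabs (F T - l) < eps.

Lemma lim_inf_unique F l1 l2 : lim_inf F l1 -> lim_inf F l2 -> l1 = l2.
Proof. intros H1 H2. destruct (Req_dec l1 l2) as [e|ne]; auto. exfalso.
 assert (Hd : 0 < Rabs (l1 - l2) / 2) by (apply Rdiv_lt_0_compat; [apply Rabs_pos_lt; lra|lra]).
 destruct (H1 _ Hd) as [T1 HT1]. destruct (H2 _ Hd) as [T2 HT2].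
 specialize (HT1 (Rmax T1 T2) (Rmax_l _ _)). specialize (HT2 (Rmax T1 T2) (Rmax_r _ _)).
 assert (Rabs (l1 - l2) <= Rabs (F (Rmax T1 T2) - l2) + Rabs (F (Rmax T1 T2) - l1)).
 { replace (l1 - l2) with ((F (Rmax T1 T2) - l2) - (F (Rmax T1 T2) - l1)) by ring.
   eapply Rle_trans. apply Rabs_triang. rewrite Rabs_Ropp. lra. }
 lra. Qed.

Lemma lim_inf_ext F G l T1 : lim_inf F l -> (forall T, T1 <= T -> F T = G T) -> lim_inf G l.
Proof. intros H E eps He. destruct (H eps He) as [T0 HT]. exists (Rmax T0 T1). intros T HT'.
 rewrite <- E. apply HT. eapply Rle_trans. apply Rmax_l. eauto. eapply Rle_trans. apply Rmax_r. eauto. Qed.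

Lemma lim_inf_plus F G l1 l2 : lim_inf F l1 -> lim_inf G l2 -> lim_inf (fun T => F T + G T) (l1 + l2).
Proof. intros H1 H2 eps He. destruct (H1 (eps/2)) as [T1 HT1]. lra. destruct (H2 (eps/2)) as [T2 HT2]. lra.
 exists (Rmax T1 T2). intros T HT. specialize (HT1 T ltac:(eapply Rle_trans; [apply Rmax_l|eauto])).
 specialize (HT2 T ltac:(eapply Rle_trans; [apply Rmax_r|eauto])).
 replace (F T + G T - (l1 + l2)) with ((F T - l1) + (G T - l2)) by ring. eapply Rle_lt_trans. apply Rabs_triang. lra. Qed.

Lemma lim_inf_const c : lim_inf (fun _ => c) c.
Proof. intros eps He. exists 0. intros. rewrite Rminus_diag, Rabs_R0; auto. Qed.

Lemma lim_inf_scal F c l : lim_inf F l -> lim_inf (fun T => c * F T) (c * l).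
Proof. intros H eps He. destruct (H (eps / (Rabs c + 1))) as [T0 HT]. apply Rdiv_lt_0_compat; auto. assert (0 <= Rabs c) by apply Rabs_pos. lra.
 exists T0. intros T HT'. rewrite <- Rmult_minus_distr_l, Rabs_mult. specialize (HT T HT'). assert (0 <= Rabs c) by apply Rabs_pos.
 apply Rle_lt_trans with ((Rabs c + 1) * Rabs (F T - l)). apply Rmult_le_compat_r. apply Rabs_pos. lra.
 apply Rlt_le_trans with ((Rabs c + 1) * (eps / (Rabs c + 1))). apply Rmult_lt_compat_l; lra. right; field; lra. Qed.

Lemma lim_inf_rsum n (F : nat -> R -> R) l : (forall k, (k < n)%nat -> lim_inf (F k) (l k)) ->
  lim_inf (fun T => rsum n (fun k => F k T)) (rsum n l).
Proof. induction n; intros H; simpl. apply lim_inf_const. apply lim_inf_plus. apply IHn; auto. apply H; lia. Qed.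

Lemma lim_inf_abs_le F l c T1 : lim_inf F l -> (forall T, T1 <= T -> Rabs (F T) <= c) -> Rabs l <= c.
Proof. intros H Hb. destruct (Rle_dec (Rabs l) c) as [h|h]; auto. exfalso.
 destruct (H (Rabs l - c)) as [T0 HT]. lra. specialize (HT (Rmax T0 T1) (Rmax_l _ _)). specialize (Hb (Rmax T0 T1) (Rmax_r _ _)).
 assert (Rabs l <= Rabs (F (Rmax T0 T1)) + Rabs (F (Rmax T0 T1) - l)).
 { replace l with (F (Rmax T0 T1) - (F (Rmax T0 T1) - l)) at 1 by ring. eapply Rle_trans. apply Rabs_triang. rewrite Rabs_Ropp. lra. }
 lra. Qed.

Lemma improper_int_eq g l : has_improper_int g l -> improper_int g = l.
Proof. intros H. unfold improper_int. destruct excluded_middle_informative as [e|n].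
 - destruct constructive_indefinite_description as [l' Hl']. simpl. apply (lim_inf_unique (fun T => Rint 0 T g)); auto.
 - exfalso; apply n; eauto. Qed.

Lemma lim_inf_cauchy F : (forall eps, 0 < eps -> exists T0, forall T T', T0 <= T -> T0 <= T' -> Rabs (F T - F T') < eps) -> exists l, lim_inf F l.
Proof. intros H.
 assert (Hc : Cauchy_crit (fun n => F (INR n))).
 { intros eps He. destruct (H eps He) as [T0 HT]. destruct (INR_unbounded T0) as [M HM].
   exists M. intros n m Hn Hm. unfold Rdist. apply HT; apply Rle_trans with (INR M); try lra; apply le_INR; lia. }
 destruct (Stdlib.Reals.Rcomplete.R_complete _ Hc) as [l Hl]. exists l. intros eps He.
 destruct (H (eps/2)) as [T0 HT]. lra. exists T0. intros T HT'.
 destruct (Hl (eps/2)) as [M HM]. lra. destruct (INR_unbounded (Rmax T0 (INR M))) as [n Hn].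
 assert (INR M <= INR n) by (assert (Hx := Rmax_r T0 (INR M)); lra).
 assert (T0 <= INR n) by (assert (Hx := Rmax_l T0 (INR M)); lra).
 specialize (HM n). assert (n >= M)%nat. { apply INR_le in H0. lia. } specialize (HM H2). unfold Rdist in HM.
 specialize (HT T (INR n) HT' H1).
 replace (F T - l) with ((F T - F (INR n)) + (F (INR n) - l)) by ring. eapply Rle_lt_trans. apply Rabs_triang. lra. Qed.

Lemma lim_inf_dominated F A T1 M : (forall T T', T1 <= T <= T' -> Rabs (F T' - F T) <= A T' - A T) ->
  (forall T, T1 <= T -> A T <= M) -> exists l, lim_inf F l.
Proof. intros HFA HA. apply lim_inf_cauchy.
 assert (Hmono : forall T T', T1 <= T <= T' -> A T <= A T').
 { intros. specialize (HFA T T' H). assert (0 <= Rabs (F T' - F T)) by apply Rabs_pos. lra. }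
 destruct (completeness (fun x => exists T, T1 <= T /\ x = A T)) as [L [HL1 HL2]].
 { exists M. intros x [T [HT ->]]. auto. }
 { exists (A T1). exists T1. split; auto; lra. }
 intros eps He. destruct (Rlt_dec (L - eps) (A T1)) as [h|h].
 - exists T1. intros T T' HT HT'. destruct (Rle_dec T T').
   + specialize (HFA T T' ltac:(lra)). assert (A T' <= L) by (apply HL1; eauto). assert (A T1 <= A T) by (apply Hmono; lra).
     rewrite <- Rabs_Ropp. replace (- (F T - F T')) with (F T' - F T) by ring. lra.
   + specialize (HFA T' T ltac:(lra)). assert (A T <= L) by (apply HL1; eauto). assert (A T1 <= A T') by (apply Hmono; lra). lra.
 - assert (exists T0, T1 <= T0 /\ L - eps < A T0).
   { apply Classical_Prop.NNPP. intros Hn. assert (is_upper_bound (fun x => exists T, T1 <= T /\ x = A T) (L - eps)).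
     { intros x [T [HT ->]]. destruct (Rle_dec (A T) (L - eps)); auto. exfalso; apply Hn. exists T. split; auto; lra. }
     specialize (HL2 _ H). lra. }
   destruct H as [T0 [HT0 HA0]]. exists T0. intros T T' HT HT'. destruct (Rle_dec T T').
   + specialize (HFA T T' ltac:(lra)). assert (A T' <= L) by (apply HL1; exists T'; split; auto; lra). assert (A T0 <= A T) by (apply Hmono; lra).
     rewrite <- Rabs_Ropp. replace (- (F T - F T')) with (F T' - F T) by ring. lra.
   + specialize (HFA T' T ltac:(lra)). assert (A T <= L) by (apply HL1; exists T; split; auto; lra). assert (A T0 <= A T') by (apply Hmono; lra). lra. Qed.

Require Import Defs.
From Stdlib Require Import Reals Lra Lia ClassicalEpsilon FunctionalExtensionality Classical.
From Coquelicot Require Import Coquelicot.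
Open Scope R_scope.

Lemma C1_cont h h' : C1_deriv_on_nonneg h h' -> forall T, cont_on 0 T h.
Proof. intros [Hd _] T t Ht eps He. destruct (Hd t ltac:(lra) 1 ltac:(lra)) as [d1 [Hd1 H1]].
 assert (HA : 0 < Rabs (h' t) + 1) by (assert (0 <= Rabs (h' t)) by apply Rabs_pos; lra).
 exists (Rmin d1 (eps / (Rabs (h' t) + 1))). split. apply Rmin_pos; auto. apply Rdiv_lt_0_compat; lra.
 intros s Hs Hst. destruct (Req_dec s t) as [e|ne]. subst. rewrite Rminus_diag, Rabs_R0; auto.
 assert (Rabs (s - t) < d1) by (eapply Rlt_le_trans; [apply Hst|apply Rmin_l]).
 assert (Rabs (s - t) < eps / (Rabs (h' t) + 1)) by (eapply Rlt_le_trans; [apply Hst|apply Rmin_r]).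
 specialize (H1 (s - t) ltac:(lra) H ltac:(lra)). replace (t + (s - t)) with s in H1 by ring.
 assert (Hq : Rabs ((h s - h t) / (s - t)) < Rabs (h' t) + 1).
 { eapply Rle_lt_trans. 2: { apply Rplus_lt_compat_l with (r := Rabs (h' t)) in H1. exact H1. }
   replace ((h s - h t) / (s - t)) with (h' t + ((h s - h t) / (s - t) - h' t)) at 1 by ring. apply Rabs_triang. }
 assert (Hst0 : 0 < Rabs (s - t)) by (apply Rabs_pos_lt; lra).
 replace (h s - h t) with ((h s - h t) / (s - t) * (s - t)) by (field; lra). rewrite Rabs_mult.
 apply Rle_lt_trans with ((Rabs (h' t) + 1) * Rabs (s - t)). apply Rmult_le_compat_r; lra.
 apply Rlt_le_trans with ((Rabs (h' t) + 1) * (eps / (Rabs (h' t) + 1))). apply Rmult_lt_compat_l; lra. right; field; lra. Qed.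

Lemma C1_lip0 h h' : C1_deriv_on_nonneg h h' -> exists d L, 0 < d /\ 0 <= L /\ forall t, 0 <= t <= d -> Rabs (h t - h 0) <= L * t.
Proof. intros [Hd _]. destruct (Hd 0 ltac:(lra) 1 ltac:(lra)) as [d1 [Hd1 H1]].
 exists (d1 / 2), (Rabs (h' 0) + 1). split. lra. split. assert (0 <= Rabs (h' 0)) by apply Rabs_pos; lra.
 intros t Ht. destruct (Req_dec t 0) as [e|ne]. subst. rewrite Rminus_diag, Rabs_R0. lra.
 specialize (H1 t ne ltac:(rewrite Rabs_right; lra) ltac:(lra)). rewrite Rplus_0_l in H1.
 replace (h t - h 0) with ((h t - h 0) / t * t) by (field; lra). rewrite Rabs_mult, (Rabs_right t) by lra.
 apply Rmult_le_compat_r. lra.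
 replace ((h t - h 0) / t) with (h' 0 + ((h t - h 0) / t - h' 0)) by ring. eapply Rle_trans. apply Rabs_triang. lra. Qed.

Lemma finite_bound n (P : nat -> R -> Prop) (h : nat -> R -> R) :
  (forall k, (k < n)%nat -> exists B, forall x, P k x -> Rabs (h k x) <= B) ->
  exists B, 0 <= B /\ forall k x, (k < n)%nat -> P k x -> Rabs (h k x) <= B.
Proof. induction n; intros H. exists 0. split. lra. intros; lia.
 destruct IHn as [B1 [HB1 H1]]. intros; apply H; lia. destruct (H n ltac:(lia)) as [B2 H2].
 exists (B1 + Rabs B2). split. assert (0 <= Rabs B2) by apply Rabs_pos. lra.
 intros k x Hk Hx. destruct (Nat.eq_dec k n). subst. specialize (H2 x Hx). assert (B2 <= Rabs B2) by apply RRle_abs. lra.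
 specialize (H1 k x ltac:(lia) Hx). assert (0 <= Rabs B2) by apply Rabs_pos. lra. Qed.

Lemma finite_dL n (P : nat -> R -> R -> Prop) :
  (forall k L L' t, L <= L' -> P k L t -> P k L' t) ->
  (forall k, (k < n)%nat -> exists d L, 0 < d /\ 0 <= L /\ forall t, 0 <= t <= d -> P k L t) ->
  exists d L, 0 < d /\ 0 <= L /\ forall k t, (k < n)%nat -> 0 <= t <= d -> P k L t.
Proof. intros Hm. induction n; intros H. exists 1, 0. repeat split; try lra. intros; lia.
 destruct IHn as [d1 [L1 [Hd1 [HL1 H1]]]]. intros; apply H; lia. destruct (H n ltac:(lia)) as [d2 [L2 [Hd2 [HL2 H2]]]].
 exists (Rmin d1 d2), (L1 + L2). split. apply Rmin_pos; auto. split. lra.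
 intros k t Hk Ht. assert (t <= d1) by (eapply Rle_trans; [apply Ht|apply Rmin_l]). assert (t <= d2) by (eapply Rle_trans; [apply Ht|apply Rmin_r]).
 destruct (Nat.eq_dec k n). subst. apply Hm with L2. lra. apply H2; lra. apply Hm with L1. lra. apply H1; lia || lra. Qed.

Lemma finite_min n (P : nat -> R -> Prop) :
  (forall k, (k < n)%nat -> exists d, 0 < d /\ forall d', 0 < d' <= d -> P k d') ->
  exists d, 0 < d /\ forall k d', (k < n)%nat -> 0 < d' <= d -> P k d'.
Proof. induction n; intros H. exists 1. split. lra. intros; lia.
 destruct IHn as [d1 [Hd1 H1]]. intros; apply H; lia. destruct (H n ltac:(lia)) as [d2 [Hd2 H2]].
 exists (Rmin d1 d2). split. apply Rmin_pos; auto.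
 intros k d' Hk Hd'. assert (d' <= d1) by (eapply Rle_trans; [apply Hd'|apply Rmin_l]). assert (d' <= d2) by (eapply Rle_trans; [apply Hd'|apply Rmin_r]).
 destruct (Nat.eq_dec k n). subst. apply H2; lra. apply H1; lia || lra. Qed.

Section Main.
Variable N : nat.
Variable D : nat -> (nat -> R) -> Prop.
Hypothesis HD : forall i q, (i < N)%nat -> D i q -> InE N i q.
Variable f ft : payoff.
Hypothesis HfI : CondI N D f.
Hypothesis HfC1 : forall i q, (i < N)%nat -> D i q -> C1_deriv_on_nonneg (fun t => f t i q) (fun t => ft t i q).

Lemma fcont j q T : (j < N)%nat -> D j q -> cont_on 0 T (fun t => f t j q).
Proof. intros. eapply C1_cont. apply HfC1; auto. Qed.

Lemma I_bound c : 0 < c -> exists M, forall j q T, (j < N)%nat -> D j q -> rnorm N q <= c -> 0 <= T ->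
  RInt (fun t => Rabs (f t j q)) 0 T <= M.
Proof. intros Hc. destruct (HfI c Hc) as [M HM]. exists M. intros j q T Hj Hq Hr HT.
 assert (Hex : ex_RInt (fun t => Rabs (f t j q)) 0 T) by (apply cont_on_ex_RInt; auto; apply cont_on_abs, fcont; auto).
 rewrite (RInt_Reals _ _ _ (ex_RInt_Reals_0 _ _ _ Hex)). apply HM; auto.
 intros t Ht. split. apply Rabs_pos. intros z Hz. exists (Rabs (f t j q)). split; auto. exists j, q. auto. Qed.

Definition limv (F : R -> R) : R :=
  match excluded_middle_informative (exists l, lim_inf F l) with
  | left H => proj1_sig (constructive_indefinite_description _ H)
  | right _ => 0 end.

Lemma limv_spec F : (exists l, lim_inf F l) -> lim_inf F (limv F).
Proof. intros H. unfold limv. destruct excluded_middle_informative as [e|n]; [|contradiction].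
 destruct constructive_indefinite_description; simpl; auto. Qed.

Definition gg (G : nat -> nat -> R) (tau : R) (k : nat) (t : R) := rsum N (fun j => expm N G (t - tau) k j * f t j (G j)).
Definition SA (G : nat -> nat -> R) (t : R) := rsum N (fun j => Rabs (f t j (G j))).
Definition Wv (G : nat -> nat -> R) (tau : R) (k : nat) := limv (fun T => RInt (gg G tau k) tau T).

Lemma P_cont G : Gen N G -> forall X k j, (k < N)%nat -> (j < N)%nat -> cont_on 0 X (fun t => expm N G t k j).
Proof. intros HG X k j Hk Hj. destruct (P_lip N G HG) as [L [HL HLip]]. apply cont_on_lip with L; auto.
 intros s t Hs Ht Hst. destruct (Rle_dec s t).
 - specialize (HLip s (t - s) k j). replace (s + (t - s)) with t in HLip by ring.
   rewrite (Rabs_minus_sym (expm N G s k j)), (Rabs_minus_sym s t), (Rabs_right (t - s)) by lra.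
   rewrite (Rabs_minus_sym s t), Rabs_right in Hst by lra. apply HLip; try lra; auto.
 - specialize (HLip t (s - t) k j). replace (t + (s - t)) with s in HLip by ring.
   rewrite (Rabs_right (s - t)) by lra. rewrite Rabs_right in Hst by lra. apply HLip; try lra; auto. Qed.

Lemma gg_cont G : Gen N G -> InQ N D G -> forall tau T k, 0 <= tau <= T -> (k < N)%nat -> cont_on tau T (gg G tau k).
Proof. intros HG HQ tau T k HT Hk. unfold gg. apply cont_on_rsum. intros j Hj. apply cont_on_mult. lra.
 - assert (H := cont_on_shift 0 (T - tau) tau _ (P_cont G HG (T - tau) k j Hk Hj)).
   replace (0 + tau) with tau in H by ring. replace (T - tau + tau) with T in H by ring. exact H.
 - apply cont_on_sub with 0 T; try lra. apply fcont; auto. Qed.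

Lemma SA_cont G : InQ N D G -> forall a b, 0 <= a -> cont_on a b (SA G).
Proof. intros HQ a b Ha. unfold SA. apply cont_on_rsum. intros j Hj. apply cont_on_abs.
 apply cont_on_sub with 0 b; try lra. apply fcont; auto. Qed.

Lemma gg_abs G : Gen N G -> forall tau k t, (k < N)%nat -> tau <= t -> Rabs (gg G tau k t) <= SA G t.
Proof. intros HG tau k t Hk Ht. unfold gg, SA. eapply Rle_trans. apply rsum_abs. apply rsum_le. intros j Hj.
 rewrite Rabs_mult. replace (Rabs (f t j (G j))) with (1 * Rabs (f t j (G j))) at 2 by ring.
 apply Rmult_le_compat_r. apply Rabs_pos. apply P_abs_le1; auto; lra. Qed.

Lemma SA_nonneg G t : 0 <= SA G t.
Proof. unfold SA. apply rsum_nonneg. intros; apply Rabs_pos. Qed.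

Lemma SA_bound G : InQ N D G -> exists M, forall a b, 0 <= a <= b -> RInt (SA G) a b <= M.
Proof. intros HQ. set (c := 1 + rsum N (fun j => rnorm N (G j))).
 assert (Hr : forall j, (j < N)%nat -> rnorm N (G j) <= c).
 { intros j Hj. unfold c. assert (rnorm N (G j) <= rsum N (fun j => rnorm N (G j))).
   apply (rsum_single_le N (fun j => rnorm N (G j))); auto. intros; unfold rnorm; apply rsum_nonneg; intros; apply Rabs_pos. lra. }
 assert (Hc : 0 < c). { unfold c. assert (0 <= rsum N (fun j => rnorm N (G j))). apply rsum_nonneg; intros; unfold rnorm; apply rsum_nonneg; intros; apply Rabs_pos. lra. }
 destruct (I_bound c Hc) as [M HM]. exists (INR N * M). intros a b Hab.
 assert (E0 : ex_RInt (SA G) 0 a) by (apply cont_on_ex_RInt; try lra; apply SA_cont; auto; lra).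
 assert (E1 : ex_RInt (SA G) a b) by (apply cont_on_ex_RInt; try lra; apply SA_cont; auto; lra).
 assert (0 <= RInt (SA G) 0 a) by (apply RInt_ge_0; auto; try lra; intros; apply SA_nonneg).
 assert (Hch: RInt (SA G) 0 a + RInt (SA G) a b = RInt (SA G) 0 b) by (apply RInt_Chasles'; auto).
 assert (RInt (SA G) 0 b <= INR N * M).
 { unfold SA. rewrite RInt_rsum. apply rsum_le_const. intros j Hj. apply HM; auto. lra.
   intros j Hj. apply cont_on_ex_RInt. lra. apply cont_on_abs. apply fcont; auto. }
 lra. Qed.

Lemma plus_minus_l (x y : R) : x + y - x = y.
Proof. ring. Qed.

Lemma gg_ex G : Gen N G -> InQ N D G -> forall tau a b k, 0 <= tau <= a -> a <= b -> (k < N)%nat -> ex_RInt (gg G tau k) a b.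
Proof. intros. apply cont_on_ex_RInt; auto. apply cont_on_sub with tau b; try lra. apply gg_cont; auto; lra. Qed.

Lemma ggabs_ex G : Gen N G -> InQ N D G -> forall tau a b k, 0 <= tau <= a -> a <= b -> (k < N)%nat -> ex_RInt (fun t => Rabs (gg G tau k t)) a b.
Proof. intros. apply cont_on_ex_RInt; auto. apply cont_on_abs. apply cont_on_sub with tau b; try lra. apply gg_cont; auto; lra. Qed.

Lemma SA_ex G : InQ N D G -> forall a b, 0 <= a <= b -> ex_RInt (SA G) a b.
Proof. intros. apply cont_on_ex_RInt. lra. apply SA_cont; auto; lra. Qed.

Lemma RInt_gg_bound G : Gen N G -> InQ N D G -> forall tau a b k, 0 <= tau <= a -> a <= b -> (k < N)%nat ->
  Rabs (RInt (gg G tau k) a b) <= RInt (SA G) a b.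
Proof. intros HG HQ tau a b k H1 H2 Hk. eapply Rle_trans. apply abs_RInt_le; auto. apply gg_ex; auto.
 apply RInt_le; auto. apply ggabs_ex; auto. apply SA_ex; auto; lra. intros. apply gg_abs; auto; lra. Qed.

Lemma W_ex G : Gen N G -> InQ N D G -> forall tau k, 0 <= tau -> (k < N)%nat -> exists l, lim_inf (fun T => RInt (gg G tau k) tau T) l.
Proof. intros HG HQ tau k Ht Hk. destruct (SA_bound G HQ) as [M HM].
 apply lim_inf_dominated with (A := fun T => RInt (SA G) tau T) (T1 := tau) (M := M).
 - intros T T' HT. rewrite <- (RInt_Chasles' (gg G tau k) tau T T') by (apply gg_ex; auto; lra).
   rewrite <- (RInt_Chasles' (SA G) tau T T') by (apply SA_ex; auto; lra).
   rewrite !plus_minus_l.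
   apply RInt_gg_bound; auto; lra.
 - intros T HT. apply HM. lra. Qed.

Lemma W_spec G : Gen N G -> InQ N D G -> forall tau k, 0 <= tau -> (k < N)%nat -> lim_inf (fun T => RInt (gg G tau k) tau T) (Wv G tau k).
Proof. intros. apply limv_spec. apply W_ex; auto. Qed.

Lemma W_bound G : Gen N G -> InQ N D G -> exists MW, 0 <= MW /\ forall tau k, 0 <= tau -> (k < N)%nat -> Rabs (Wv G tau k) <= MW.
Proof. intros HG HQ. destruct (SA_bound G HQ) as [M HM]. exists (Rabs M). split. apply Rabs_pos.
 intros tau k Ht Hk. apply lim_inf_abs_le with (F := fun T => RInt (gg G tau k) tau T) (T1 := tau). apply W_spec; auto.
 intros T HT. eapply Rle_trans. apply RInt_gg_bound; auto; lra. eapply Rle_trans. apply HM. lra. apply RRle_abs. Qed.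

Lemma W_semi G : Gen N G -> InQ N D G -> forall tau h k, 0 <= tau -> 0 <= h -> (k < N)%nat ->
  Wv G tau k = RInt (gg G tau k) tau (tau + h) + rsum N (fun l => expm N G h k l * Wv G (tau + h) l).
Proof. intros HG HQ tau h k Ht Hh Hk. apply (lim_inf_unique (fun T => RInt (gg G tau k) tau T)). apply W_spec; auto.
 apply lim_inf_ext with (F := fun T => RInt (gg G tau k) tau (tau + h) + rsum N (fun l => expm N G h k l * RInt (gg G (tau + h) l) (tau + h) T)) (T1 := tau + h).
 - apply lim_inf_plus. apply lim_inf_const. apply lim_inf_rsum. intros l Hl. apply lim_inf_scal. apply W_spec; auto; lra.
 - intros T HT. rewrite <- (RInt_Chasles' (gg G tau k) tau (tau + h) T) by (apply gg_ex; auto; lra). f_equal.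
   rewrite (rsum_ext N _ (fun l => RInt (fun t => expm N G h k l * gg G (tau+h) l t) (tau+h) T)).
   2: { intros l Hl. rewrite RInt_scal'. reflexivity. apply gg_ex; auto; lra. }
   rewrite <- (RInt_rsum (tau+h) T N (fun l t => expm N G h k l * gg G (tau+h) l t)).
   2: { intros l Hl. apply ex_RInt_scal'. apply gg_ex; auto; lra. }
   apply RInt_ext. intros t Ht'. rewrite Rmin_left, Rmax_right in Ht' by lra. unfold gg.
   rewrite (rsum_ext N (fun j => expm N G (t - tau) k j * f t j (G j)) (fun j => rsum N (fun l => expm N G h k l * expm N G (t - (tau + h)) l j) * f t j (G j))).
   2: { intros j Hj. f_equal. replace (t - tau) with (h + (t - (tau + h))) by ring. apply P_semi; auto. }
   rewrite (rsum_ext N (fun j => rsum N (fun l => expm N G h k l * expm N G (t - (tau + h)) l j) * f t j (G j))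
      (fun j => rsum N (fun l => expm N G h k l * (expm N G (t - (tau + h)) l j * f t j (G j))))).
   2: { intros j Hj. rewrite <- rsum_scalr. apply rsum_ext; intros; ring. }
   rewrite rsum_swap. apply rsum_ext. intros l Hl. rewrite rsum_scal. reflexivity. Qed.

Lemma gg_split G : Gen N G -> forall tau h k t, (k < N)%nat ->
  gg G tau k t = rsum N (fun l => expm N G h k l * gg G (tau + h) l t).
Proof. intros HG tau h k t Hk. unfold gg.
 rewrite (rsum_ext N (fun j => expm N G (t - tau) k j * f t j (G j)) (fun j => rsum N (fun l => expm N G h k l * (expm N G (t - (tau + h)) l j * f t j (G j))))).
 2: { intros j Hj. replace (t - tau) with (h + (t - (tau + h))) by ring. rewrite P_semi by auto. rewrite <- rsum_scalr. apply rsum_ext; intros; ring. }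
 rewrite rsum_swap. apply rsum_ext. intros l Hl. rewrite rsum_scal. reflexivity. Qed.

Lemma RInt_gg_split G : Gen N G -> InQ N D G -> forall tau h k a b, (k < N)%nat -> 0 <= tau + h <= a -> a <= b ->
  RInt (gg G tau k) a b = rsum N (fun l => expm N G h k l * RInt (gg G (tau + h) l) a b).
Proof. intros HG HQ tau h k a b Hk H1 H2.
 rewrite (rsum_ext N _ (fun l => RInt (fun t => expm N G h k l * gg G (tau+h) l t) a b)).
 2: { intros l Hl. rewrite RInt_scal'. reflexivity. apply gg_ex; auto; lra. }
 rewrite <- (RInt_rsum a b N (fun l t => expm N G h k l * gg G (tau+h) l t)).
 2: { intros l Hl. apply ex_RInt_scal'. apply gg_ex; auto; lra. }
 apply RInt_ext. intros. apply gg_split; auto. Qed.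

Lemma SA_sup G : InQ N D G -> exists B, 0 <= B /\ forall t, 0 <= t <= 1 -> SA G t <= B.
Proof. intros HQ. destruct (cont_on_bound 0 1 (SA G) ltac:(lra) (SA_cont G HQ 0 1 ltac:(lra))) as [B [HB H]].
 exists B. split; auto. intros t Ht. specialize (H t Ht). rewrite Rabs_right in H; auto. apply Rle_ge, SA_nonneg. Qed.

Lemma W_lip0 G : Gen N G -> InQ N D G -> exists CW, 0 <= CW /\ forall x k, 0 <= x <= 1 -> (k < N)%nat -> Rabs (Wv G x k - Wv G 0 k) <= CW * x.
Proof. intros HG HQ. destruct (W_bound G HG HQ) as [MW [HMW HW]]. destruct (P_small1 N G HG) as [C1 [HC1 HS1]].
 destruct (SA_sup G HQ) as [B [HB HBs]].
 exists (B + INR N * C1 * MW). split. assert (0 <= INR N) by apply pos_INR. assert (0 <= INR N * C1 * MW) by (repeat apply Rmult_le_pos; auto). lra.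
 intros x k Hx Hk. rewrite (W_semi G HG HQ 0 x k) by (auto; lra). rewrite Rplus_0_l.
 rewrite <- (rsum_delta_l N k (Wv G x)) at 1 by auto.
 replace (rsum N (fun k0 => idm k k0 * Wv G x k0) - (RInt (gg G 0 k) 0 x + rsum N (fun l => expm N G x k l * Wv G x l)))
   with (rsum N (fun l => (idm k l - expm N G x k l) * Wv G x l) - RInt (gg G 0 k) 0 x).
 2: { rewrite (rsum_ext N (fun l => (idm k l - expm N G x k l) * Wv G x l) (fun l => idm k l * Wv G x l - expm N G x k l * Wv G x l)) by (intros; ring).
      rewrite rsum_minus. ring. }
 unfold Rminus at 1. eapply Rle_trans. apply Rabs_triang. rewrite Rabs_Ropp. replace ((B + INR N * C1 * MW) * x) with (INR N * C1 * MW * x + B * x) by ring. apply Rplus_le_compat.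
 - eapply Rle_trans. apply rsum_abs. replace (INR N * C1 * MW * x) with (INR N * (C1 * x * MW)) by ring. apply rsum_le_const.
   intros l Hl. rewrite Rabs_mult. apply Rmult_le_compat; try apply Rabs_pos. rewrite Rabs_minus_sym. apply HS1; lra. apply HW; auto; lra.
 - eapply Rle_trans. apply RInt_gg_bound; auto; lra. replace (B * x) with ((x - 0) * B) by ring.
   eapply Rle_trans. apply Rle_abs. rewrite Rabs_right by (apply Rle_ge, RInt_ge_0; try lra; [apply SA_ex; auto; lra| intros; apply SA_nonneg]).
   replace (RInt (SA G) 0 x) with (Rabs (RInt (SA G) 0 x)) by (apply Rabs_right, Rle_ge, RInt_ge_0; try lra; [apply SA_ex; auto; lra| intros; apply SA_nonneg]).
   apply RInt_abs_bound. lra. apply SA_ex; auto; lra. intros t Ht. rewrite Rabs_right by (apply Rle_ge, SA_nonneg). apply HBs; lra. Qed.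

Lemma Fval_W G : Gen N G -> InQ N D G -> forall k, (k < N)%nat -> Fval N f G k = Wv G 0 k.
Proof. intros HG HQ k Hk. unfold Fval. apply improper_int_eq. unfold has_improper_int.
 apply (lim_inf_ext (fun T => RInt (gg G 0 k) 0 T) (fun T => Rint 0 T (fun t => rsum N (fun j => expm N G t k j * f t j (G j)))) _ 0).
 apply W_spec; auto; lra. intros T HT.
 assert (E : gg G 0 k = (fun t => rsum N (fun j => expm N G t k j * f t j (G j)))).
 { apply functional_extensionality. intros t. unfold gg. rewrite Rminus_0_r. reflexivity. }
 rewrite <- E. symmetry. apply Rint_eq. apply gg_ex; auto; lra. Qed.

Definition Phi Q Qs i s := RInt (gg Q 0 i) 0 s + rsum N (fun k => expm N Q s i k * Wv Qs s k).
Definition Br Q Qs s h k := RInt (gg Q s k) s (s + h) - RInt (gg Qs s k) s (s + h) +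
  rsum N (fun l => (expm N Q h k l - expm N Qs h k l) * Wv Qs (s + h) l).

Lemma Fconcat_Phi Q Qs i e : Gen N Q -> InQ N D Q -> Gen N Qs -> InQ N D Qs -> (i < N)%nat -> 0 < e ->
  Fconcat N f Q Qs e i = Phi Q Qs i e.
Proof. intros GQ IQ GS IS Hi He. unfold Fconcat. apply improper_int_eq. unfold has_improper_int.
 apply (lim_inf_ext (fun T => RInt (gg Q 0 i) 0 e + rsum N (fun k => expm N Q e i k * RInt (gg Qs e k) e T)) _ _ e).
 - apply lim_inf_plus. apply lim_inf_const. apply lim_inf_rsum. intros k Hk. apply lim_inf_scal. apply W_spec; auto; lra.
 - intros T HT. match goal with |- _ = Rint 0 T ?g => set (he := g) end.
   assert (HL : forall t, 0 < t < e -> gg Q 0 i t = he t).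
   { intros t Ht. unfold he. destruct Rle_dec; [|lra]. unfold gg. rewrite Rminus_0_r. reflexivity. }
   assert (HR : forall t, e < t -> rsum N (fun k => expm N Q e i k * gg Qs e k t) = he t).
   { intros t Ht. unfold he. destruct Rle_dec; [lra|]. unfold gg.
     rewrite (rsum_ext N (fun k => expm N Q e i k * rsum N (fun j => expm N Qs (t - e) k j * f t j (Qs j)))
        (fun k => rsum N (fun j => expm N Q e i k * expm N Qs (t - e) k j * f t j (Qs j)))).
     2: { intros k Hk. rewrite <- rsum_scal. apply rsum_ext; intros; ring. }
     rewrite rsum_swap. apply rsum_ext. intros j Hj. rewrite <- rsum_scalr. reflexivity. }
   assert (ex1 : ex_RInt he 0 e).
   { apply (ex_RInt_ext (gg Q 0 i)). intros x Hx. rewrite Rmin_left, Rmax_right in Hx by lra. apply HL; lra.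
     apply gg_ex; auto; lra. }
   assert (exr : ex_RInt (fun t => rsum N (fun k => expm N Q e i k * gg Qs e k t)) e T).
   { apply ex_RInt_rsum. intros k Hk. apply ex_RInt_scal'. apply gg_ex; auto; lra. }
   assert (ex2 : ex_RInt he e T).
   { apply (ex_RInt_ext (fun t => rsum N (fun k => expm N Q e i k * gg Qs e k t))). intros x Hx. rewrite Rmin_left, Rmax_right in Hx by lra. apply HR; lra. auto. }
   rewrite Rint_eq by (apply ex_RInt_Chasles with e; auto).
   rewrite <- (RInt_Chasles' he 0 e T) by auto. f_equal.
   + apply RInt_ext. intros x Hx. rewrite Rmin_left, Rmax_right in Hx by lra. apply HL; lra.
   + rewrite <- (RInt_ext (fun t => rsum N (fun k => expm N Q e i k * gg Qs e k t))).
     2: { intros x Hx. rewrite Rmin_left, Rmax_right in Hx by lra. apply HR; lra. }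
     rewrite (RInt_rsum e T N (fun k t => expm N Q e i k * gg Qs e k t)).
     2: { intros k Hk. apply ex_RInt_scal'. apply gg_ex; auto; lra. }
     apply rsum_ext. intros k Hk. rewrite RInt_scal'. reflexivity. apply gg_ex; auto; lra. Qed.

Lemma Phi_0 Q Qs i : Gen N Q -> (i < N)%nat -> Phi Q Qs i 0 = Wv Qs 0 i.
Proof. intros GQ Hi. unfold Phi. rewrite RInt_point. change (zero : R) with 0. rewrite Rplus_0_l.
 rewrite (rsum_ext N _ (fun k => idm i k * Wv Qs 0 k)) by (intros; rewrite P_zero; auto).
 apply rsum_delta_l; auto. Qed.

Lemma Phi_incr Q Qs i s h : Gen N Q -> InQ N D Q -> Gen N Qs -> InQ N D Qs -> (i < N)%nat -> 0 <= s -> 0 <= h ->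
  Phi Q Qs i (s + h) - Phi Q Qs i s = rsum N (fun k => expm N Q s i k * Br Q Qs s h k).
Proof. intros GQ IQ GS IS Hi Hs Hh. unfold Phi.
 rewrite <- (RInt_Chasles' (gg Q 0 i) 0 s (s + h)) by (apply gg_ex; auto; lra).
 rewrite (RInt_gg_split Q GQ IQ 0 s i s (s + h)) by (auto; lra). rewrite Rplus_0_l.
 rewrite (rsum_ext N (fun k => expm N Q (s + h) i k * Wv Qs (s + h) k)
    (fun l => rsum N (fun k => expm N Q s i k * (expm N Q h k l * Wv Qs (s + h) l)))).
 2: { intros l Hl. rewrite P_semi by auto. rewrite <- rsum_scalr. apply rsum_ext; intros; ring. }
 rewrite rsum_swap.
 rewrite (rsum_ext N (fun k => expm N Q s i k * Wv Qs s k)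
    (fun k => expm N Q s i k * (RInt (gg Qs s k) s (s + h) + rsum N (fun l => expm N Qs h k l * Wv Qs (s + h) l)))).
 2: { intros k Hk. rewrite (W_semi Qs GS IS s h k) by auto. reflexivity. }
 rewrite (rsum_ext N (fun k => expm N Q s i k * Br Q Qs s h k)
    (fun k => (expm N Q s i k * RInt (gg Q s k) s (s + h) + rsum N (fun l => expm N Q s i k * (expm N Q h k l * Wv Qs (s + h) l)))
      - expm N Q s i k * (RInt (gg Qs s k) s (s + h) + rsum N (fun l => expm N Qs h k l * Wv Qs (s + h) l)))).
 2: { intros k Hk. unfold Br. rewrite (rsum_ext N (fun l => (expm N Q h k l - expm N Qs h k l) * Wv Qs (s + h) l)
        (fun l => expm N Q h k l * Wv Qs (s + h) l - expm N Qs h k l * Wv Qs (s + h) l)) by (intros; ring).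
      rewrite rsum_minus. rewrite rsum_scal. ring. }
 rewrite rsum_minus, rsum_plus. ring. Qed.

Lemma f_bound G : InQ N D G -> exists B, 0 <= B /\ forall t j, 0 <= t <= 1 -> (j < N)%nat -> Rabs (f t j (G j)) <= B.
Proof. intros IG. destruct (SA_sup G IG) as [B [HB H]]. exists B. split; auto. intros t j Ht Hj.
 eapply Rle_trans. 2: apply (H t Ht). unfold SA. apply (rsum_single_le N (fun j => Rabs (f t j (G j)))); auto. intros; apply Rabs_pos. Qed.

Lemma gg_decomp G C1 B : Gen N G -> (forall h i j, 0 <= h <= 1 -> Rabs (expm N G h i j - idm i j) <= C1 * h) ->
  (forall t j, 0 <= t <= 1 -> (j < N)%nat -> Rabs (f t j (G j)) <= B) -> 0 <= C1 -> 0 <= B ->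
  forall s t k, (k < N)%nat -> 0 <= s <= t -> t <= 1 -> Rabs (gg G s k t - f t k (G k)) <= INR N * C1 * B * (t - s).
Proof. intros GG HS1 HB HC1 HB0 s t k Hk Hst Ht. unfold gg.
 rewrite <- (rsum_delta_l N k (fun j => f t j (G j))) by auto. rewrite <- rsum_minus.
 eapply Rle_trans. apply rsum_abs. replace (INR N * C1 * B * (t - s)) with (INR N * (C1 * (t - s) * B)) by ring.
 apply rsum_le_const. intros j Hj. rewrite <- Rmult_minus_distr_r, Rabs_mult. apply Rmult_le_compat; try apply Rabs_pos.
 apply HS1; lra. apply HB; auto; lra. Qed.

Lemma Wpart Q Qs C2a C2b MW W h k : (k < N)%nat -> 0 <= h <= 1 ->
  (forall h i j, (i < N)%nat -> 0 <= h <= 1 -> Rabs (expm N Q h i j - idm i j - h * Q i j) <= C2a * h ^ 2) ->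
  (forall h i j, (i < N)%nat -> 0 <= h <= 1 -> Rabs (expm N Qs h i j - idm i j - h * Qs i j) <= C2b * h ^ 2) ->
  (forall l, (l < N)%nat -> Rabs (W l) <= MW) ->
  rsum N (fun l => (expm N Q h k l - expm N Qs h k l) * W l) <= h * rsum N (fun l => (Q k l - Qs k l) * W l) + INR N * (C2a + C2b) * MW * h ^ 2.
Proof. intros Hk Hh H2a H2b HW. rewrite <- rsum_scal.
 match goal with |- ?X <= ?Y + ?Z => cut (Rabs (X - Y) <= Z); [intros Hc; assert (X - Y <= Rabs (X - Y)) by apply Rle_abs; lra|] end.
 rewrite <- rsum_minus. eapply Rle_trans. apply rsum_abs.
 replace (INR N * (C2a + C2b) * MW * h ^ 2) with (INR N * ((C2a * h^2 + C2b * h^2) * MW)) by ring.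
 apply rsum_le_const. intros l Hl.
 replace ((expm N Q h k l - expm N Qs h k l) * W l - h * ((Q k l - Qs k l) * W l)) with
   (((expm N Q h k l - idm k l - h * Q k l) - (expm N Qs h k l - idm k l - h * Qs k l)) * W l) by ring.
 rewrite Rabs_mult. apply Rmult_le_compat; try apply Rabs_pos. unfold Rminus at 1. eapply Rle_trans. apply Rabs_triang. rewrite Rabs_Ropp.
 apply Rplus_le_compat; auto. apply HW; auto. Qed.

Lemma RInt_le_const g a b c : a <= b -> ex_RInt g a b -> (forall t, a < t < b -> g t <= c) -> RInt g a b <= (b - a) * c.
Proof. intros Hab Hg H. replace ((b - a) * c) with (RInt (fun _ => c) a b). apply RInt_le; auto. apply ex_RInt_const.
 rewrite RInt_const. reflexivity. Qed.

Lemma Br_bound Q Qs : Gen N Q -> InQ N D Q -> Gen N Qs -> InQ N D Qs ->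
  (forall k, (k < N)%nat -> Q k <> Qs k -> Gamma N f Qs k (Qs k) > Gamma N f Qs k (Q k)) ->
  exists e0 C, 0 < e0 /\ 0 <= C /\ forall s h k, 0 <= s -> 0 < h -> s + h <= e0 -> (k < N)%nat -> Br Q Qs s h k <= C * h ^ 2.
Proof. intros GQ IQ GS IS Hgam.
 destruct (P_small1 N Q GQ) as [C1Q [HC1Q HS1Q]]. destruct (P_small1 N Qs GS) as [C1S [HC1S HS1S]].
 destruct (P_small2 N Q GQ) as [C2Q [HC2Q HS2Q]]. destruct (P_small2 N Qs GS) as [C2S [HC2S HS2S]].
 destruct (f_bound Q IQ) as [BQ [HBQ HfQ]]. destruct (f_bound Qs IS) as [BS [HBS HfS]].
 destruct (W_bound Qs GS IS) as [MW [HMW HW]]. destruct (W_lip0 Qs GS IS) as [CW [HCW HWl]].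
 destruct (finite_dL N (fun j L t => 0 <= t -> Rabs (f t j (Q j) - f 0 j (Q j)) <= L * t /\ Rabs (f t j (Qs j) - f 0 j (Qs j)) <= L * t)) as [df [Lf [Hdf [HLf Hlip]]]].
 { intros j L L' t HLL' H Ht. destruct (H Ht). split; eapply Rle_trans; eauto; apply Rmult_le_compat_r; lra. }
 { intros j Hj. destruct (C1_lip0 _ _ (HfC1 j (Q j) Hj (IQ j Hj))) as [d1 [L1 [Hd1 [HL1 H1]]]].
   destruct (C1_lip0 _ _ (HfC1 j (Qs j) Hj (IS j Hj))) as [d2 [L2 [Hd2 [HL2 H2]]]].
   exists (Rmin d1 d2), (L1 + L2). split. apply Rmin_pos; auto. split. lra. intros t Ht Ht0.
   assert (t <= d1) by (eapply Rle_trans; [apply Ht|apply Rmin_l]). assert (t <= d2) by (eapply Rle_trans; [apply Ht|apply Rmin_r]).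
   split. eapply Rle_trans. apply H1; lra. apply Rmult_le_compat_r; lra. eapply Rle_trans. apply H2; lra. apply Rmult_le_compat_r; lra. }
 destruct (finite_bound N (fun _ _ => True) (fun k _ => rsum N (fun l => Rabs (Q k l - Qs k l)))) as [DQ [HDQ HDQb]].
 { intros k Hk. exists (Rabs (rsum N (fun l => Rabs (Q k l - Qs k l)))). intros; apply Rle_refl. }
 set (gam k := Gamma N f Qs k (Q k) - Gamma N f Qs k (Qs k)).
 set (K0 := 2 * Lf + DQ * CW + 1).
 assert (HK0 : 0 < K0) by (unfold K0; assert (0 <= DQ * CW) by (apply Rmult_le_pos; auto); lra).
 destruct (finite_min N (fun k d => Q k <> Qs k -> gam k + (2 * Lf + DQ * CW) * d <= 0)) as [dm [Hdm Hdmin]].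
 { intros k Hk. destruct (classic (Q k = Qs k)) as [e|ne].
   - exists 1. split. lra. intros. contradiction.
   - assert (gam k < 0) by (unfold gam; specialize (Hgam k Hk ne); lra).
     exists (- gam k / K0). split. apply Rdiv_lt_0_compat; lra.
     intros d' Hd' _. assert (0 <= DQ * CW) by (apply Rmult_le_pos; auto).
     assert ((2 * Lf + DQ * CW) * d' <= K0 * (- gam k / K0)).
     { apply Rmult_le_compat; try lra. unfold K0; lra. }
     replace (K0 * (- gam k / K0)) with (- gam k) in H1 by (field; lra). lra. }
 set (B := BQ + BS).
 set (E1 := INR N * C1Q * B + INR N * C1S * B).
 set (C := E1 + INR N * (C2Q + C2S) * MW).
 assert (HN : 0 <= INR N) by apply pos_INR.
 assert (HE1 : 0 <= E1) by (unfold E1, B; assert (0 <= INR N * C1Q * (BQ + BS)) by (repeat apply Rmult_le_pos; lra);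
    assert (0 <= INR N * C1S * (BQ + BS)) by (repeat apply Rmult_le_pos; lra); lra).
 set (e0 := Rmin (Rmin 1 df) dm).
 assert (He0 : 0 < e0) by (unfold e0; repeat apply Rmin_pos; lra).
 assert (He01 : e0 <= 1) by (unfold e0; eapply Rle_trans; [apply Rmin_l|apply Rmin_l]).
 assert (He0d : e0 <= df) by (unfold e0; eapply Rle_trans; [apply Rmin_l|apply Rmin_r]).
 assert (He0m : e0 <= dm) by (unfold e0; apply Rmin_r).
 exists e0, C. split; auto. split. unfold C. assert (0 <= INR N * (C2Q + C2S) * MW) by (repeat apply Rmult_le_pos; lra). lra.
 intros s h k Hs Hh Hsh Hk.
 assert (HfQB : forall t j, 0 <= t <= 1 -> (j < N)%nat -> Rabs (f t j (Q j)) <= B) by (intros; unfold B; specialize (HfQ t j H H0); lra).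
 assert (HfSB : forall t j, 0 <= t <= 1 -> (j < N)%nat -> Rabs (f t j (Qs j)) <= B) by (intros; unfold B; specialize (HfS t j H H0); lra).
 assert (Hpt : forall t, s <= t <= s + h -> gg Q s k t - gg Qs s k t <= (f t k (Q k) - f t k (Qs k)) + E1 * h).
 { intros t Ht. assert (H1 := gg_decomp Q C1Q B GQ HS1Q HfQB HC1Q ltac:(unfold B; lra) s t k Hk ltac:(lra) ltac:(lra)).
   assert (H2 := gg_decomp Qs C1S B GS HS1S HfSB HC1S ltac:(unfold B; lra) s t k Hk ltac:(lra) ltac:(lra)).
   apply Rabs_le_between in H1. apply Rabs_le_between in H2.
   assert (INR N * C1Q * B * (t - s) <= INR N * C1Q * B * h) by (apply Rmult_le_compat_l; [repeat apply Rmult_le_pos; unfold B; lra|lra]).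
   assert (INR N * C1S * B * (t - s) <= INR N * C1S * B * h) by (apply Rmult_le_compat_l; [repeat apply Rmult_le_pos; unfold B; lra|lra]).
   unfold E1. lra. }
 assert (Hint : RInt (gg Q s k) s (s + h) - RInt (gg Qs s k) s (s + h) = RInt (fun t => gg Q s k t - gg Qs s k t) s (s + h)).
 { rewrite RInt_minus'; auto; apply gg_ex; auto; lra. }
 assert (Hexd : ex_RInt (fun t => gg Q s k t - gg Qs s k t) s (s + h)).
 { apply (ex_RInt_minus (gg Q s k) (gg Qs s k)); apply gg_ex; auto; lra. }
 assert (HWp := Wpart Q Qs C2Q C2S MW (Wv Qs (s + h)) h k Hk ltac:(lra) HS2Q HS2S ltac:(intros; apply HW; auto; lra)).
 unfold Br. rewrite Hint.
 destruct (classic (Q k = Qs k)) as [e|ne].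
 - assert (HI : RInt (fun t => gg Q s k t - gg Qs s k t) s (s + h) <= (s + h - s) * (E1 * h)).
   { apply RInt_le_const; auto. lra. intros t Ht. specialize (Hpt t ltac:(lra)). rewrite e in Hpt. lra. }
   assert (HZ : rsum N (fun l => (Q k l - Qs k l) * Wv Qs (s + h) l) = 0).
   { apply rsum_zero. intros. rewrite e. ring. }
   rewrite HZ in HWp. replace (s + h - s) with h in HI by ring. unfold C. simpl. simpl in HWp. nra.
 - assert (Hf0 : forall t, 0 <= t <= e0 -> f t k (Q k) - f t k (Qs k) <= (f 0 k (Q k) - f 0 k (Qs k)) + 2 * Lf * e0).
   { intros t Ht. destruct (Hlip k t Hk ltac:(lra) ltac:(lra)) as [H1 H2].
     apply Rabs_le_between in H1. apply Rabs_le_between in H2. assert (Lf * t <= Lf * e0) by (apply Rmult_le_compat_l; lra). lra. }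
   assert (HI : RInt (fun t => gg Q s k t - gg Qs s k t) s (s + h) <= (s + h - s) * ((f 0 k (Q k) - f 0 k (Qs k)) + 2 * Lf * e0 + E1 * h)).
   { apply RInt_le_const; auto. lra. intros t Ht. specialize (Hpt t ltac:(lra)). specialize (Hf0 t ltac:(lra)). lra. }
   replace (s + h - s) with h in HI by ring.
   assert (HW0 : rsum N (fun l => (Q k l - Qs k l) * Wv Qs (s + h) l) <= rsum N (fun l => (Q k l - Qs k l) * Wv Qs 0 l) + DQ * CW * e0).
   { apply Rplus_le_reg_r with (- rsum N (fun l => (Q k l - Qs k l) * Wv Qs 0 l)).
     replace (rsum N (fun l => (Q k l - Qs k l) * Wv Qs 0 l) + DQ * CW * e0 + - rsum N (fun l => (Q k l - Qs k l) * Wv Qs 0 l)) with (DQ * CW * e0) by ring.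
     replace (rsum N (fun l => (Q k l - Qs k l) * Wv Qs (s + h) l) + - rsum N (fun l => (Q k l - Qs k l) * Wv Qs 0 l))
       with (rsum N (fun l => (Q k l - Qs k l) * (Wv Qs (s + h) l - Wv Qs 0 l))).
     2: { fold (Rminus (rsum N (fun l => (Q k l - Qs k l) * Wv Qs (s + h) l)) (rsum N (fun l => (Q k l - Qs k l) * Wv Qs 0 l))). rewrite <- rsum_minus. apply rsum_ext; intros; ring. }
     eapply Rle_trans. apply Rle_abs. eapply Rle_trans. apply rsum_abs.
     apply Rle_trans with (rsum N (fun l => Rabs (Q k l - Qs k l) * (CW * e0))).
     { apply rsum_le. intros l Hl. rewrite Rabs_mult. apply Rmult_le_compat_l. apply Rabs_pos.
       eapply Rle_trans. apply HWl; auto; lra. apply Rmult_le_compat_l; lra. }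
     rewrite rsum_scalr. specialize (HDQb k 0 Hk I). simpl in HDQb. rewrite Rabs_right in HDQb.
     replace (DQ * CW * e0) with (DQ * (CW * e0)) by ring. apply Rmult_le_compat_r. apply Rmult_le_pos; lra. auto.
     apply Rle_ge, rsum_nonneg; intros; apply Rabs_pos. }
   assert (Hgk : gam k = (f 0 k (Q k) - f 0 k (Qs k)) + rsum N (fun l => (Q k l - Qs k l) * Wv Qs 0 l)).
   { unfold gam, Gamma. rewrite (rsum_ext N (fun l => (Q k l - Qs k l) * Wv Qs 0 l) (fun l => Q k l * Fval N f Qs l - Qs k l * Fval N f Qs l)).
     rewrite rsum_minus. ring. intros l Hl. rewrite Fval_W by auto. ring. }
   assert (Hneg : gam k + (2 * Lf + DQ * CW) * e0 <= 0) by (apply (Hdmin k e0 Hk); auto; lra).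
   assert (h * (gam k + (2 * Lf + DQ * CW) * e0) <= 0) by (apply Rmult_le_0_l; lra).
   unfold C. simpl. simpl in HWp. nra. Qed.

Lemma telescope (u : nat -> R) n : rsum n (fun m => u (S m) - u m) = u n - u 0%nat.
Proof. induction n; simpl. ring. rewrite IHn. ring. Qed.

Lemma Phi_le Q Qs i : Gen N Q -> InQ N D Q -> Gen N Qs -> InQ N D Qs -> (i < N)%nat ->
  (forall k, (k < N)%nat -> Q k <> Qs k -> Gamma N f Qs k (Qs k) > Gamma N f Qs k (Q k)) ->
  exists e0, 0 < e0 /\ forall e, 0 < e <= e0 -> Phi Q Qs i e <= Phi Q Qs i 0.
Proof. intros GQ IQ GS IS Hi Hgam. destruct (Br_bound Q Qs GQ IQ GS IS Hgam) as [e0 [C [He0 [HC HB]]]].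
 exists e0. split; auto. intros e He.
 assert (Hn : forall n, (0 < n)%nat -> Phi Q Qs i e - Phi Q Qs i 0 <= INR N * C * e ^ 2 / INR n).
 { intros n Hn. assert (HnR : 0 < INR n) by (apply lt_0_INR; lia). set (h := e / INR n).
   assert (Hh : 0 < h) by (apply Rdiv_lt_0_compat; lra).
   set (u := fun m => Phi Q Qs i (INR m * h)).
   assert (E1 : Phi Q Qs i e = u n) by (unfold u, h; f_equal; field; lra).
   assert (E0 : Phi Q Qs i 0 = u 0%nat) by (unfold u; simpl; f_equal; ring).
   rewrite E1, E0, <- telescope.
   replace (INR N * C * e ^ 2 / INR n) with (INR n * (INR N * (C * h ^ 2))) by (unfold h; field; lra).
   apply rsum_le_const. intros m Hm. unfold u.
   assert (Hx : 0 <= INR m * h) by (apply Rmult_le_pos; [apply pos_INR|lra]).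
   assert (Hxh : INR m * h + h <= e).
   { replace (INR m * h + h) with (INR (S m) * h) by (rewrite S_INR; ring).
     apply Rle_trans with (INR n * h). apply Rmult_le_compat_r. lra. apply le_INR; lia. unfold h; right; field; lra. }
   replace (INR (S m) * h) with (INR m * h + h) by (rewrite S_INR; ring).
   rewrite (Phi_incr Q Qs i (INR m * h) h) by (auto; lra). apply rsum_le_const. intros k Hk.
   assert (0 <= expm N Q (INR m * h) i k) by (apply P_nonneg; auto).
   assert (expm N Q (INR m * h) i k <= 1) by (apply P_le1; auto).
   assert (Br Q Qs (INR m * h) h k <= C * h ^ 2) by (apply HB; auto; lra).
   assert (0 <= C * h ^ 2) by (apply Rmult_le_pos; auto; apply pow_le; lra).
   apply Rle_trans with (expm N Q (INR m * h) i k * (C * h ^ 2)). apply Rmult_le_compat_l; auto.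
   replace (C * h ^ 2) with (1 * (C * h ^ 2)) at 2 by ring. apply Rmult_le_compat_r; auto. }
 destruct (Rle_dec (Phi Q Qs i e - Phi Q Qs i 0) 0) as [h|h]. lra. exfalso. apply Rnot_le_lt in h.
 set (d := Phi Q Qs i e - Phi Q Qs i 0). assert (Hd : 0 < d) by (unfold d; lra).
 destruct (INR_unbounded (INR N * C * e ^ 2 / d)) as [m Hm].
 specialize (Hn (S m) ltac:(lia)). fold d in Hn. rewrite S_INR in Hn.
 assert (HmR : 0 <= INR m) by apply pos_INR.
 assert (HX : 0 <= INR N * C * e ^ 2). { assert (0 <= INR N) by apply pos_INR. assert (0 <= e ^ 2) by (apply pow_le; lra). apply Rmult_le_pos; [apply Rmult_le_pos|]; auto. }
 assert (INR N * C * e ^ 2 / (INR m + 1) < d).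
 { apply Rmult_lt_reg_r with (INR m + 1). lra. unfold Rdiv. rewrite Rmult_assoc, Rinv_l by lra. rewrite Rmult_1_r.
   assert (INR N * C * e ^ 2 < d * INR m). { apply Rmult_lt_reg_r with (/ d). apply Rinv_0_lt_compat; lra.
     replace (d * INR m * / d) with (INR m) by (field; lra). exact Hm. }
   nra. }
 lra. Qed.

End Main.

Theorem mainTheorem4
  (N : nat) (D : nat -> (nat -> R) -> Prop)
  (HD : forall i q, (i < N)%nat -> D i q -> InE N i q)
  (f ft : payoff)
  (HfI : CondI N D f)
  (HfC1 : forall i q, (i < N)%nat -> D i q ->
            C1_deriv_on_nonneg (fun t => f t i q) (fun t => ft t i q))
  (HftI : CondI N D ft)
  (HR : CondR N D f ft)
  (Qs : nat -> nat -> R) (HQs : InQ N D Qs)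
  (Hgamma : forall i Q, (i < N)%nat -> InQ N D Q -> Q i <> Qs i ->
              Gamma N f Qs i (Qs i) > Gamma N f Qs i (Q i)) :
  StrongEq N D f Qs.
Proof. intros i Q Hi HQ.
 assert (GQ := InQ_Gen N D Q HD HQ). assert (GS := InQ_Gen N D Qs HD HQs).
 destruct (Phi_le N D f ft HfI HfC1 Q Qs i GQ HQ GS HQs Hi) as [e0 [He0 H]].
 { intros k Hk Hne. apply Hgamma; auto. }
 exists e0. split; auto. intros e' He'.
 rewrite (Fval_W N D f ft HfI HfC1 Qs GS HQs i Hi).
 rewrite (Fconcat_Phi N D f ft HfI HfC1 Q Qs i e' GQ HQ GS HQs Hi) by lra.
 rewrite <- (Phi_0 N f Q Qs i GQ Hi). apply Rle_ge. apply H; lra. Qed.
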